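(* Let $p$ be an offspring distribution whose generating function satisfies $f(z)=z+(1-z)^{\beta-1}l_1(1-z)$ for $z\in[0,1]$, where $\beta\in(2,3]$ and $l_1$ is slowly varying at $0^+$, and let $\nu$ be the law of the associated infinite tree with spine (described in the context). Then for every $i\ge1$: (a) there is a function $l_2$ slowly varying at $0^+$ such that $\langle z^{|\mathcal A^i|}\rangle_\nu=1-(1-z)^{\frac{\beta-2}{\beta-1}}\,l_2(1-z)$ for $z\in(0,1)$; (b) $\nu(X^i_n>0)=\dfrac{\beta-1}{\beta-2}\,\dfrac1n\,(1+o(1))$ as $n\to\infty$.
   Context: $\nu$ is the law of the random infinite planar tree: root $r$ of degree one joined to $s_1$; independently for each $i\ge1$, spine vertex $s_i$ has $k-1$ children with probability $(k-1)p(k-1)$, $k\ge2$; one uniformly chosen child is $s_{i+1}$ and each of the other $k-2$ children roots an independent Galton–Watson tree with offspring distribution $p$. $\mathcal A^i$ is $s_i$ together with all these finite Galton–Watson subtrees hanging from $s_i$ (the component of $s_i$ after deleting the spine edges at $s_i$); $|\mathcal A^i|$ is its number of edges and $X^i_n$ is the number of its vertices at distance $n$ from $s_i$. $\langle\cdot\rangle_\nu$ is expectation. A function $l$ is slowly varying at $0^+$ if $l(\lambda x)/l(x)\to1$ as $x\to0^+$ for every $\lambda>0$. *)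

(* Defs.v *)
From Stdlib Require Import Reals List ClassicalEpsilon.
Import ListNotations.
Open Scope R_scope.

Inductive tree : Type := Node : list tree -> tree.

Fixpoint gw_weight (p : nat -> R) (t : tree) : R :=
  match t with
  | Node ts =>
      p (length ts) *
      (fix prodw (l : list tree) : R :=
         match l with nil => 1 | t' :: l' => gw_weight p t' * prodw l' end) ts
  end.

Definition forest_weight (p : nat -> R) (ts : list tree) : R :=
  fold_right Rmult 1 (map (gw_weight p) ts).

Fixpoint tree_edges (t : tree) : nat :=
  match t with
  | Node ts =>
      (fix s (l : list tree) : nat :=
         match l with nil => 0%nat | t' :: l' => (S (tree_edges t') + s l')%nat end) ts
  end.

Fixpoint tree_level (n : nat) (t : tree) : nat :=
  match t with
  | Node ts =>
      match n with
      | O => 1%nat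
      | S m =>
          (fix s (l : list tree) : nat :=
             match l with nil => 0%nat | t' :: l' => (tree_level m t' + s l')%nat end) ts
      end
  end.

(** Unordered sum of a nonnegative family over a (countable) type:
    the least upper bound of all finite partial sums (over duplicate-free lists). *)
Definition nnsum {T : Type} (w : T -> R) : R :=
  epsilon (inhabits 0)
    (fun s => is_lub (fun r => exists L : list T, NoDup L /\
                       r = fold_right Rplus 0 (map w L)) s).

(** Configuration of the component A^i at spine vertex s_i:
    (j, ts) where s_i has k-1 = length ts + 1 children, the spine child s_{i+1}
    is at position j (0 <= j < k-1), and ts is the ordered list of the k-2
    finite Galton-Watson subtrees hanging from the other children.
    A^i itself is the planar tree Node ts rooted at s_i. *)
Definition conf : Type := (nat * list tree)%type.

Definition conf_tree (c : conf) : tree := Node (snd c).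

(** Law of A^i under nu (the same for every i >= 1, since the spine steps
    are i.i.d.; the index i is kept only to mirror the statement):
    P(k-1 children) = (k-1) p(k-1), uniform spine position 1/(k-1),
    independent GW subtrees. *)
Definition A_law (p : nat -> R) (i : nat) (c : conf) : R :=
  let (j, ts) := c in
  let k := (length ts + 2)%nat in
  if Nat.ltb j (k - 1) then
    (INR (k - 1) * p (k - 1)%nat) * / INR (k - 1) * forest_weight p ts
  else 0.

Definition A_size_gf (p : nat -> R) (i : nat) (z : R) : R :=
  nnsum (fun c => A_law p i c * z ^ tree_edges (conf_tree c)).

Definition A_survival (p : nat -> R) (i n : nat) : R :=
  nnsum (fun c => A_law p i c *
                  (if Nat.ltb 0 (tree_level n (conf_tree c)) then 1 else 0)).

(** x^y for x >= 0, with the convention 0^y = 0 (used only for y > 0). *)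
Definition rpow (x y : R) : R := if Rle_dec x 0 then 0 else Rpower x y.

Definition slowly_varying_0 (l : R -> R) : Prop :=
  forall lam : R, 0 < lam ->
  forall eps : R, 0 < eps -> exists delta : R, 0 < delta /\
    forall x : R, 0 < x < delta -> Rabs (l (lam * x) / l x - 1) < eps.

Definition offspring_distribution (p : nat -> R) : Prop :=
  (forall k, 0 <= p k) /\ infinite_sum p 1.

(* Main.v *)
Require Import Defs.
From Stdlib Require Import Reals List Lra Lia ClassicalEpsilon Classical.
Import ListNotations.
Open Scope R_scope.

Fixpoint lsum {T : Type} (w : T -> R) (l : list T) : R :=
  match l with [] => 0 | x :: l' => w x + lsum w l' end.

Lemma lsum_fold {T} (w : T -> R) l : fold_right Rplus 0 (map w l) = lsum w l.
Proof. induction l; simpl; congruence. Qed.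

Lemma lsum_app {T} (w : T -> R) l m : lsum w (l ++ m) = lsum w l + lsum w m.
Proof. induction l; simpl; lra. Qed.

Lemma lsum_nonneg {T} (w : T -> R) l : (forall x, 0 <= w x) -> 0 <= lsum w l.
Proof. intros H; induction l; simpl; [lra|]. specialize (H a); lra. Qed.

Lemma lsum_ext {T} (w v : T -> R) l : (forall x, In x l -> w x = v x) -> lsum w l = lsum v l.
Proof. induction l; simpl; intros H; auto. rewrite H, IHl; auto. Qed.

Lemma lsum_le {T} (w v : T -> R) l : (forall x, In x l -> w x <= v x) -> lsum w l <= lsum v l.
Proof. induction l; simpl; intros H; [lra|].
  assert (w a <= v a) by auto. assert (lsum w l <= lsum v l) by auto. lra. Qed.

Lemma lsum_scal {T} (w : T -> R) c l : lsum (fun x => c * w x) l = c * lsum w l.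
Proof. induction l; simpl; [ring|]. rewrite IHl; ring. Qed.

Lemma lsum_minus {T} (w v : T -> R) l : lsum (fun x => w x - v x) l = lsum w l - lsum v l.
Proof. induction l; simpl; [ring|]. rewrite IHl; ring. Qed.

Lemma lsum_map {T U} (w : U -> R) (f : T -> U) l : lsum w (map f l) = lsum (fun x => w (f x)) l.
Proof. induction l; simpl; congruence. Qed.

Lemma lsum_flat_map {T U} (w : U -> R) (f : T -> list U) l :
  lsum w (flat_map f l) = lsum (fun x => lsum w (f x)) l.
Proof. induction l; simpl; auto. rewrite lsum_app; congruence. Qed.

Lemma lsum_le_incl {T} (w : T -> R) (L M : list T) :
  (forall x, 0 <= w x) -> NoDup L -> NoDup M ->
  (forall x, In x L -> w x <> 0 -> In x M) -> lsum w L <= lsum w M.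
Proof.
  intros Hw HL. revert M. induction HL as [|a L Ha HL IH]; intros M HM Hinc; simpl.
  - apply lsum_nonneg; auto.
  - destruct (Req_dec (w a) 0) as [E|E].
    + rewrite E. assert (lsum w L <= lsum w M); [|lra].
      apply IH; auto. intros x Hx; apply Hinc; simpl; auto.
    + assert (Hin : In a M) by (apply Hinc; simpl; auto).
      destruct (in_split _ _ Hin) as [M1 [M2 ->]].
      rewrite lsum_app; simpl.
      assert (lsum w L <= lsum w (M1 ++ M2)); [|rewrite lsum_app in H; lra].
      apply IH.
      * apply NoDup_remove_1 with a; auto.
      * intros x Hx Hx0. assert (In x (M1 ++ a :: M2)) by (apply Hinc; simpl; auto).
        apply in_app_or in H. apply in_or_app. destruct H as [H|[H|H]]; auto.
        subst; contradiction.
Qed.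

Lemma nnsum_is_lub {T} (w : T -> R) B :
  (forall L, NoDup L -> lsum w L <= B) ->
  is_lub (fun r => exists L : list T, NoDup L /\ r = fold_right Rplus 0 (map w L)) (nnsum w).
Proof.
  intros HB. unfold nnsum. apply epsilon_spec.
  destruct (completeness (fun r => exists L : list T, NoDup L /\ r = fold_right Rplus 0 (map w L))) as [m Hm].
  - exists B. intros r [L [HL ->]]. rewrite lsum_fold; auto.
  - exists 0. exists []. split; [constructor|reflexivity].
  - exists m; exact Hm.
Qed.

Lemma nnsum_enum {T} (w : T -> R) (E : nat -> nat -> list T) (X : R) :
  (forall x, 0 <= w x) -> (forall k h, NoDup (E k h)) ->
  (forall L, NoDup L -> exists k h, forall x, In x L -> w x <> 0 -> In x (E k h)) ->
  (forall k h, lsum w (E k h) <= X) ->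
  (forall eps, 0 < eps -> exists k h, X - eps < lsum w (E k h)) ->
  nnsum w = X.
Proof.
  intros Hw HE Hcov Hub Happ.
  assert (HB : forall L, NoDup L -> lsum w L <= X).
  { intros L HL. destruct (Hcov L HL) as [k [h Hk]].
    apply Rle_trans with (lsum w (E k h)); [apply lsum_le_incl; auto|apply Hub]. }
  destruct (nnsum_is_lub w X HB) as [H1 H2].
  apply Rle_antisym.
  - apply H2. intros r [L [HL ->]]. rewrite lsum_fold; auto.
  - destruct (Rle_lt_dec X (nnsum w)) as [|Hlt]; auto.
    destruct (Happ (X - nnsum w)) as [k [h Hkh]]; [lra|].
    assert (lsum w (E k h) <= nnsum w).
    { apply H1. exists (E k h). split; auto. rewrite lsum_fold; auto. }
    lra.
Qed.

Fixpoint lprod {T : Type} (u : T -> R) (l : list T) : R :=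
  match l with [] => 1 | x :: l' => u x * lprod u l' end.

Fixpoint lists_of_len {T : Type} (j : nat) (L : list T) : list (list T) :=
  match j with O => [[]] | S j' => flat_map (fun t => map (cons t) (lists_of_len j' L)) L end.

Lemma in_lists_of_len {T} j L (l : list T) :
  In l (lists_of_len j L) <-> length l = j /\ (forall x, In x l -> In x L).
Proof.
  revert l; induction j; intros l; simpl.
  - split.
    + intros [<-|[]]; simpl; split; auto; intros x [].
    + intros [H _]; destruct l; simpl in *; [auto|discriminate].
  - rewrite in_flat_map. split.
    + intros [t [Ht Hl]]. apply in_map_iff in Hl. destruct Hl as [l' [<- Hl']].
      apply IHj in Hl'. destruct Hl' as [H1 H2]. simpl; split; [congruence|].
      intros x [<-|Hx]; auto.
    + intros [H1 H2]. destruct l as [|t l']; simpl in H1; [discriminate|].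
      exists t; split; [apply H2; simpl; auto|]. apply in_map. apply IHj. split; [lia|].
      intros x Hx; apply H2; simpl; auto.
Qed.

Lemma NoDup_map_inj {T U} (f : T -> U) L :
  (forall x y, f x = f y -> x = y) -> NoDup L -> NoDup (map f L).
Proof.
  intros Hf HL; induction HL; simpl; constructor; auto.
  intros Hin. apply in_map_iff in Hin. destruct Hin as [y [Hy Hy']].
  apply Hf in Hy; subst; contradiction.
Qed.

Lemma NoDup_flat_map {T U} (f : T -> list U) L :
  NoDup L -> (forall x, In x L -> NoDup (f x)) ->
  (forall x y z, In x L -> In y L -> In z (f x) -> In z (f y) -> x = y) ->
  NoDup (flat_map f L).
Proof.
  intros HL; induction HL as [|a L Ha HL IH]; intros Hf Hd; simpl; [constructor|].
  apply NoDup_app.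
  - apply Hf; simpl; auto.
  - apply IH; [intros; apply Hf; simpl; auto|]. intros; eapply Hd; simpl; eauto.
  - intros z Hz Hz'. apply in_flat_map in Hz'. destruct Hz' as [y [Hy Hzy]].
    assert (a = y) by (eapply Hd; simpl; eauto). subst; contradiction.
Qed.

Lemma NoDup_lists_of_len {T} j (L : list T) : NoDup L -> NoDup (lists_of_len j L).
Proof.
  intros HL; induction j; simpl.
  - constructor; [intros []|constructor].
  - apply NoDup_flat_map; auto.
    + intros x _. apply NoDup_map_inj; auto. intros a b H; injection H; auto.
    + intros x y z _ _ Hx Hy. apply in_map_iff in Hx, Hy.
      destruct Hx as [l1 [<- _]]; destruct Hy as [l2 [E _]]. injection E; auto.
Qed.

Lemma lsum_lprod_lists {T} j (L : list T) u :
  lsum (lprod u) (lists_of_len j L) = (lsum u L) ^ j.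
Proof.
  induction j; simpl; [ring|].
  rewrite lsum_flat_map. rewrite <- IHj.
  rewrite (lsum_ext _ (fun x => lsum (lprod u) (lists_of_len j L) * u x)).
  - rewrite lsum_scal. ring.
  - intros x _. rewrite lsum_map. simpl. rewrite lsum_scal. ring.
Qed.

Definition lists_upto {T} (k : nat) (L : list T) : list (list T) :=
  flat_map (fun j => lists_of_len j L) (seq 0 (S k)).

Lemma in_lists_upto {T} k L (l : list T) :
  In l (lists_upto k L) <-> (length l <= k)%nat /\ (forall x, In x l -> In x L).
Proof.
  unfold lists_upto. rewrite in_flat_map. split.
  - intros [j [Hj Hl]]. apply in_seq in Hj. apply in_lists_of_len in Hl. destruct Hl; split; auto; lia.
  - intros [H1 H2]. exists (length l). split; [apply in_seq; lia|]. apply in_lists_of_len; auto.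
Qed.

Lemma NoDup_lists_upto {T} k (L : list T) : NoDup L -> NoDup (lists_upto k L).
Proof.
  intros HL. apply NoDup_flat_map; [apply seq_NoDup| |].
  - intros; apply NoDup_lists_of_len; auto.
  - intros x y z _ _ Hx Hy. apply in_lists_of_len in Hx, Hy. destruct Hx, Hy; congruence.
Qed.

Lemma lsum_upto {T} (G : nat -> R) u k (L : list T) :
  lsum (fun l => G (length l) * lprod u l) (lists_upto k L)
  = lsum (fun j => G j * (lsum u L)^j) (seq 0 (S k)).
Proof.
  unfold lists_upto. rewrite lsum_flat_map. apply lsum_ext. intros j _.
  rewrite <- lsum_lprod_lists, <- lsum_scal. apply lsum_ext.
  intros l Hl. apply in_lists_of_len in Hl. destruct Hl as [-> _]; auto.
Qed.

Fixpoint trees (k h : nat) : list tree :=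
  match h with O => [Node []] | S h' => map Node (lists_upto k (trees k h')) end.

Fixpoint bnd (k h : nat) (t : tree) : Prop :=
  match h with
  | O => t = Node []
  | S h' => match t with Node ts => (length ts <= k)%nat /\ Forall (bnd k h') ts end
  end.

Lemma in_trees k h t : In t (trees k h) <-> bnd k h t.
Proof.
  revert t; induction h; intros t.
  - simpl. split; [intros [<-|[]]; auto| intros ->; auto].
  - change (In t (map Node (lists_upto k (trees k h))) <-> match t with Node ts => (length ts <= k)%nat /\ Forall (bnd k h) ts end).
    rewrite in_map_iff. split.
    + intros [ts [<- Hts]]. apply in_lists_upto in Hts. destruct Hts as [H1 H2].
      split; auto. apply Forall_forall. intros x Hx; apply IHh; auto.
    + destruct t as [ts]. intros [H1 H2]. exists ts; split; auto.
      apply in_lists_upto; split; auto. intros x Hx. apply IHh.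
      rewrite Forall_forall in H2; auto.
Qed.

Lemma bnd_mono k h k' h' t : (k <= k')%nat -> (h <= h')%nat -> bnd k h t -> bnd k' h' t.
Proof.
  revert h' t; induction h; intros h' t Hk Hh; simpl.
  - intros ->. destruct h'; simpl; auto. split; [simpl; lia|constructor].
  - destruct h' as [|h']; [lia|]. destruct t as [ts]; simpl. intros [H1 H2]; split; [lia|].
    eapply Forall_impl; [|exact H2]. intros a; apply IHh; auto; lia.
Qed.

Lemma NoDup_trees k h : NoDup (trees k h).
Proof.
  induction h.
  - simpl; constructor; [intros []|constructor].
  - change (NoDup (map Node (lists_upto k (trees k h)))). apply NoDup_map_inj; [intros a b E; injection E; auto|]. apply NoDup_lists_upto; auto.
Qed.

Lemma trees_incl k h k' h' t : (k <= k')%nat -> (h <= h')%nat ->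
  In t (trees k h) -> In t (trees k' h').
Proof. intros; apply in_trees; apply in_trees in H1; eapply bnd_mono; eauto. Qed.

Definition tree_ind2 (P : tree -> Prop) (H : forall ts, Forall P ts -> P (Node ts)) : forall t, P t :=
  fix F t := match t with
    Node ts => H ts ((fix G l : Forall P l :=
                      match l with [] => Forall_nil _ | x :: l' => Forall_cons _ (F x) (G l') end) ts)
  end.

Lemma list_bnd_ex (L : list tree) :
  Forall (fun t => exists k h, bnd k h t) L -> exists k h, Forall (bnd k h) L.
Proof.
  induction 1 as [|t L [k [h Ht]] _ [k' [h' HL]]].
  - exists O, O; constructor.
  - exists (max k k'), (max h h'). constructor.
    + eapply bnd_mono; [| |exact Ht]; lia.
    + eapply Forall_impl; [|exact HL]. intros a; apply bnd_mono; lia.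
Qed.

Lemma tree_bnd_ex t : exists k h, bnd k h t.
Proof.
  induction t using tree_ind2. apply list_bnd_ex in H. destruct H as [k [h H]].
  exists (max k (length ts)), (S h). simpl. split; [lia|].
  eapply Forall_impl; [|exact H]. intros a; apply bnd_mono; lia.
Qed.

Lemma trees_cover (L : list tree) : exists k h, forall t, In t L -> In t (trees k h).
Proof.
  assert (Forall (fun t => exists k h, bnd k h t) L) by (apply Forall_forall; intros; apply tree_bnd_ex).
  apply list_bnd_ex in H. destruct H as [k [h H]]. exists k, h. intros t Ht.
  apply in_trees. rewrite Forall_forall in H; auto.
Qed.

Lemma lsum_trees_S (U V : tree -> R) (p : nat -> R) k h :
  (forall ts, U (Node ts) = p (length ts) * lprod V ts) ->
  lsum U (trees k (S h)) = lsum (fun j => p j * (lsum V (trees k h))^j) (seq 0 (S k)).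
Proof.
  intros HU. change (trees k (S h)) with (map Node (lists_upto k (trees k h))).
  rewrite lsum_map. rewrite <- lsum_upto. apply lsum_ext; auto.
Qed.

Lemma lsum_trees_0 (U : tree -> R) k : lsum U (trees k 0) = U (Node []).
Proof. simpl; ring. Qed.

Lemma lsum_trees_mono (W : tree -> R) k h k' h' : (forall x, 0 <= W x) ->
  (k <= k')%nat -> (h <= h')%nat -> lsum W (trees k h) <= lsum W (trees k' h').
Proof.
  intros; apply lsum_le_incl; auto using NoDup_trees. intros; eapply trees_incl; eauto.
Qed.

Lemma gw_node p ts : gw_weight p (Node ts) = p (length ts) * lprod (gw_weight p) ts.
Proof. simpl. f_equal. induction ts; simpl; auto. rewrite IHts; auto. Qed.

Lemma forest_lprod p ts : forest_weight p ts = lprod (gw_weight p) ts.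
Proof. unfold forest_weight; induction ts; simpl; auto. rewrite IHts; auto. Qed.

Lemma edges_node ts : tree_edges (Node ts) = fold_right (fun t n => S (tree_edges t) + n)%nat O ts.
Proof. simpl. induction ts; simpl; auto. Qed.

Lemma pow_edges_node z ts : z ^ tree_edges (Node ts) = lprod (fun t => z * z ^ tree_edges t) ts.
Proof.
  rewrite edges_node. induction ts; [simpl; auto|]. cbn [fold_right lprod].
  rewrite pow_add, IHts. simpl; ring.
Qed.

Lemma level_node n ts : tree_level (S n) (Node ts) = fold_right (fun t m => tree_level n t + m)%nat O ts.
Proof. simpl. induction ts; simpl; auto. Qed.

Definition ind0 (b : bool) : R := if b then 1 else 0.

Lemma level_pos_node n ts :
  ind0 (Nat.ltb 0 (tree_level (S n) (Node ts)))
  = 1 - lprod (fun t => 1 - ind0 (Nat.ltb 0 (tree_level n t))) ts.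
Proof.
  rewrite level_node. induction ts as [|t ts IH]; [simpl; unfold ind0; simpl; ring|].
  cbn [fold_right lprod].
  destruct (tree_level n t) as [|m]; cbn [Nat.add].
  - rewrite IH. unfold ind0; simpl. ring.
  - unfold ind0; simpl. ring.
Qed.

Definition psum (a : nat -> R) (N : nat) : R := lsum a (seq 0 N).

Lemma psum_S a N : psum a (S N) = psum a N + a N.
Proof. unfold psum. rewrite seq_S, lsum_app. simpl. ring. Qed.

Lemma psum_0 a : psum a 0 = 0.
Proof. reflexivity. Qed.

Lemma sum_f_psum a n : sum_f_R0 a n = psum a (S n).
Proof. induction n; simpl sum_f_R0. - unfold psum; simpl; ring. - rewrite IHn, (psum_S a (S n)); ring. Qed.

Lemma psum_mono a N M : (forall n, 0 <= a n) -> (N <= M)%nat -> psum a N <= psum a M.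
Proof. intros Ha H; induction H; [lra|]. rewrite psum_S. specialize (Ha m); lra. Qed.

Lemma psum_nonneg a N : (forall n, 0 <= a n) -> 0 <= psum a N.
Proof. intros; apply lsum_nonneg; auto. Qed.

Lemma psum_ext a b N : (forall n, (n < N)%nat -> a n = b n) -> psum a N = psum b N.
Proof. intros H. unfold psum. apply lsum_ext. intros x Hx. apply in_seq in Hx. apply H; lia. Qed.

Lemma psum_le a b N : (forall n, (n < N)%nat -> a n <= b n) -> psum a N <= psum b N.
Proof. intros H. unfold psum. apply lsum_le. intros x Hx. apply in_seq in Hx. apply H; lia. Qed.

Lemma psum_minus a b N : psum (fun n => a n - b n) N = psum a N - psum b N.
Proof. apply lsum_minus. Qed.

Lemma psum_scal a c N : psum (fun n => c * a n) N = c * psum a N.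
Proof. apply lsum_scal. Qed.

Lemma isum_le a l : (forall n, 0 <= a n) -> infinite_sum a l -> forall N, psum a N <= l.
Proof.
  intros Ha Hl N. destruct (Rle_lt_dec (psum a N) l) as [|H]; auto.
  destruct (Hl (psum a N - l)) as [N' HN']; [lra|].
  specialize (HN' (max N N') ltac:(lia)). rewrite sum_f_psum in HN'. unfold Rdist in HN'.
  assert (psum a N <= psum a (S (max N N'))) by (apply psum_mono; auto; lia).
  apply Rabs_def2 in HN'. lra.
Qed.

Lemma isum_approx a l eps : infinite_sum a l -> 0 < eps -> exists N, forall n, (N <= n)%nat -> l - eps < psum a n.
Proof.
  intros Hl He. destruct (Hl eps He) as [N HN]. exists (S N). intros n Hn.
  destruct n as [|n]; [lia|]. specialize (HN n ltac:(lia)). rewrite sum_f_psum in HN.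
  unfold Rdist in HN. apply Rabs_def2 in HN. lra.
Qed.

Lemma isum_of_sup a l : (forall n, 0 <= a n) -> (forall N, psum a N <= l) ->
  (forall eps, 0 < eps -> exists N, l - eps < psum a N) -> infinite_sum a l.
Proof.
  intros Ha Hub Happ eps He. destruct (Happ eps He) as [N HN]. exists N. intros n Hn.
  rewrite sum_f_psum. unfold Rdist.
  assert (psum a N <= psum a (S n)) by (apply psum_mono; auto; lia).
  specialize (Hub (S n)). rewrite Rabs_left1; lra.
Qed.

Lemma isum_unique a l l' : infinite_sum a l -> infinite_sum a l' -> l = l'.
Proof.
  intros H1 H2. apply (UL_sequence (fun n => sum_f_R0 a n)); auto.
Qed.

Lemma pow_le_one x m : 0 <= x <= 1 -> x ^ m <= 1.
Proof. intros H. rewrite <- (pow1 m). apply pow_incr; lra. Qed.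

Lemma pow_diff_le x y m : 0 <= y <= x -> x <= 1 -> x ^ m - y ^ m <= INR m * (x - y).
Proof.
  intros Hy Hx. induction m; [simpl; lra|]. rewrite S_INR. cbn [pow].
  assert (0 <= y ^ m <= 1) by (split; [apply pow_le; lra|apply pow_le_one; lra]).
  assert (y ^ m <= x ^ m) by (apply pow_incr; lra).
  replace (x * x ^ m - y * y ^ m) with (x * (x ^ m - y ^ m) + y ^ m * (x - y)) by ring.
  assert (x * (x ^ m - y ^ m) <= x ^ m - y ^ m).
  { replace (x ^ m - y ^ m) with (1 * (x ^ m - y ^ m)) at 2 by ring.
    apply Rmult_le_compat_r; lra. }
  assert (y ^ m * (x - y) <= 1 * (x - y)) by (apply Rmult_le_compat_r; lra). nra.
Qed.

Lemma pow_diff_mono x y a b m : 0 <= y <= x -> y <= b -> 0 <= b -> x - y <= a - b ->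
  x ^ m - y ^ m <= a ^ m - b ^ m.
Proof.
  intros Hy Hyb Hb Hd. induction m; simpl; [lra|].
  assert (y ^ m <= x ^ m) by (apply pow_incr; lra).
  assert (y ^ m <= b ^ m) by (apply pow_incr; lra).
  assert (0 <= y ^ m) by (apply pow_le; lra).
  replace (x * x ^ m - y * y ^ m) with (x * (x ^ m - y ^ m) + y ^ m * (x - y)) by ring.
  replace (a * a ^ m - b * b ^ m) with (a * (a ^ m - b ^ m) + b ^ m * (a - b)) by ring.
  assert (x * (x ^ m - y ^ m) <= a * (a ^ m - b ^ m)) by (apply Rmult_le_compat; lra).
  assert (y ^ m * (x - y) <= b ^ m * (a - b)) by (apply Rmult_le_compat; lra).
  lra.
Qed.

Definition tsup (W : tree -> R) (X : R) : Prop :=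
  (forall k h, lsum W (trees k h) <= X) /\
  (forall eps, 0 < eps -> exists k h, X - eps < lsum W (trees k h)).

Lemma tsup_exists W B : (forall k h, lsum W (trees k h) <= B) -> exists X, tsup W X.
Proof.
  intros HB. destruct (completeness (fun r => exists k h, r = lsum W (trees k h))) as [X [H1 H2]].
  - exists B. intros r [k [h ->]]; auto.
  - exists (lsum W (trees 0 0)). eauto.
  - exists X. split.
    + intros k h; apply H1; eauto.
    + intros eps He. apply not_all_not_ex. intros Hn.
      assert (X <= X - eps); [|lra]. apply H2. intros r [k [h ->]].
      specialize (Hn k). apply not_ex_all_not with (n := h) in Hn. lra.
Qed.

Lemma tsup_approx W X eps : (forall x, 0 <= W x) -> tsup W X -> 0 < eps ->
  exists k0 h0, forall k h, (k0 <= k)%nat -> (h0 <= h)%nat -> X - eps < lsum W (trees k h).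
Proof.
  intros HW [_ H] He. destruct (H eps He) as [k0 [h0 Hk]]. exists k0, h0. intros k h Hk' Hh'.
  eapply Rlt_le_trans; [exact Hk|]. apply lsum_trees_mono; auto.
Qed.

Lemma tsup_nonneg W X : (forall x, 0 <= W x) -> tsup W X -> 0 <= X.
Proof. intros HW [H _]. eapply Rle_trans; [|apply (H 0%nat 0%nat)]. apply lsum_nonneg; auto. Qed.

Lemma tsup_scal W X c : 0 <= c -> tsup W X -> tsup (fun t => c * W t) (c * X).
Proof.
  intros Hc [H1 H2]. split.
  - intros k h. rewrite lsum_scal. apply Rmult_le_compat_l; auto.
  - intros eps He. destruct (Req_dec c 0) as [->|Hc0].
    + exists 0%nat, 0%nat. rewrite lsum_scal. lra.
    + destruct (H2 (eps / c)) as [k [h Hkh]]. { apply Rdiv_lt_0_compat; lra. }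
      exists k, h. rewrite lsum_scal.
      assert (c * (X - eps / c) < c * lsum W (trees k h)) by (apply Rmult_lt_compat_l; lra).
      replace (c * (X - eps / c)) with (c * X - eps) in H by (field; auto). lra.
Qed.

Lemma tsup_ext W V X : (forall t, W t = V t) -> tsup W X -> tsup V X.
Proof.
  intros E [H1 H2]; split; intros.
  - rewrite <- (lsum_ext W); auto.
  - destruct (H2 eps H) as [k [h Hk]]; exists k, h. rewrite <- (lsum_ext W); auto.
Qed.

Lemma tsup_fix (U V : tree -> R) (p : nat -> R) X FX :
  (forall n, 0 <= p n) -> (forall t, 0 <= V t) ->
  (forall ts, U (Node ts) = p (length ts) * lprod V ts) ->
  tsup V X -> X <= 1 -> infinite_sum (fun j => p j * X ^ j) FX -> tsup U FX.
Proof.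
  intros Hp HV HU HX HX1 HF.
  assert (X0 : 0 <= X) by (eapply tsup_nonneg; eauto).
  assert (Hterm : forall j, 0 <= p j * X ^ j) by (intros; apply Rmult_le_pos; auto; apply pow_le; auto).
  assert (Hsig : forall k h, 0 <= lsum V (trees k h) <= X).
  { intros; split; [apply lsum_nonneg; auto|apply HX]. }
  split.
  - intros k [|h].
    + rewrite lsum_trees_0, HU. simpl. rewrite Rmult_1_r.
      eapply Rle_trans; [|apply (isum_le _ _ Hterm HF 1)]. unfold psum; simpl; lra.
    + rewrite (lsum_trees_S U V p k h HU). fold (psum (fun j => p j * (lsum V (trees k h)) ^ j) (S k)).
      eapply Rle_trans; [|apply (isum_le _ _ Hterm HF (S k))].
      apply psum_le. intros n _. apply Rmult_le_compat_l; auto. apply pow_incr. apply Hsig.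
  - intros eps He.
    destruct (isum_approx _ _ (eps / 2) HF) as [N HN]; [lra|].
    set (K := psum (fun j => p j * INR j) N).
    assert (K0 : 0 <= K) by (apply psum_nonneg; intros; apply Rmult_le_pos; auto; apply pos_INR).
    destruct (tsup_approx V X (eps / 2 / (K + 1)) HV HX) as [k0 [h0 Hk0]].
    { apply Rdiv_lt_0_compat; lra. }
    exists (max k0 N), (S h0).
    rewrite (lsum_trees_S U V p _ h0 HU). fold (psum (fun j => p j * (lsum V (trees (max k0 N) h0)) ^ j) (S (max k0 N))).
    set (s := lsum V (trees (max k0 N) h0)).
    assert (Hs : X - eps / 2 / (K + 1) < s) by (apply Hk0; lia).
    assert (Hs2 : 0 <= s <= X) by apply Hsig.
    specialize (HN N (le_n _)).
    assert (psum (fun j => p j * s ^ j) N <= psum (fun j => p j * s ^ j) (S (max k0 N))).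
    { apply psum_mono; [intros; apply Rmult_le_pos; auto; apply pow_le; lra|lia]. }
    assert (psum (fun j => p j * X ^ j) N - psum (fun j => p j * s ^ j) N <= K * (X - s)).
    { rewrite <- psum_minus. unfold K. rewrite Rmult_comm, <- psum_scal.
      apply psum_le. intros n _. rewrite <- Rmult_minus_distr_l.
      replace ((X - s) * (p n * INR n)) with (p n * (INR n * (X - s))) by ring.
      apply Rmult_le_compat_l; auto. apply pow_diff_le; lra. }
    assert (K * (X - s) <= eps / 2).
    { assert (K * (X - s) <= K * (eps / 2 / (K + 1))) by (apply Rmult_le_compat_l; lra).
      assert (K * (eps / 2 / (K + 1)) <= eps / 2).
      { unfold Rdiv. rewrite <- Rmult_assoc, (Rmult_comm K), Rmult_assoc.
        assert (K * / (K + 1) <= 1).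
        { apply Rmult_le_reg_r with (K + 1); [lra|]. rewrite Rmult_assoc, Rinv_l; lra. }
        assert (0 <= eps * / 2) by lra.
        replace (eps * / 2) with (eps * / 2 * 1) at 2 by ring. apply Rmult_le_compat_l; lra. }
      lra. }
    lra.
Qed.

Lemma lprod_nonneg {T} (u : T -> R) l : (forall x, In x l -> 0 <= u x) -> 0 <= lprod u l.
Proof. induction l; simpl; intros H; [lra|]. apply Rmult_le_pos; auto. Qed.

Lemma lprod_mult {T} (u v : T -> R) l : lprod u l * lprod v l = lprod (fun x => u x * v x) l.
Proof. induction l; simpl; [ring|]. rewrite <- IHl; ring. Qed.

Lemma lprod_ext {T} (u v : T -> R) l : (forall x, u x = v x) -> lprod u l = lprod v l.
Proof. intros H; induction l; simpl; auto. rewrite H, IHl; auto. Qed.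

Lemma gw_nonneg p t : (forall n, 0 <= p n) -> 0 <= gw_weight p t.
Proof.
  intros Hp. induction t using tree_ind2. rewrite gw_node. apply Rmult_le_pos; auto.
  apply lprod_nonneg. rewrite Forall_forall in H; auto.
Qed.

Lemma forest_nonneg p ts : (forall n, 0 <= p n) -> 0 <= forest_weight p ts.
Proof. intros; rewrite forest_lprod; apply lprod_nonneg; intros; apply gw_nonneg; auto. Qed.

Definition confs (k h : nat) : list conf :=
  flat_map (fun ts => map (fun j => (j, ts)) (seq 0 (S (length ts)))) (lists_upto k (trees k h)).

Lemma A_law_val p i j ts : (j < S (length ts))%nat ->
  A_law p i (j, ts) = p (S (length ts)) * forest_weight p ts.
Proof.
  intros Hj. unfold A_law. replace (length ts + 2 - 1)%nat with (S (length ts)) by lia.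
  replace (Nat.ltb j (S (length ts))) with true by (symmetry; apply Nat.ltb_lt; auto).
  field. apply not_0_INR; lia.
Qed.

Lemma A_law_zero p i j ts : ~ (j < S (length ts))%nat -> A_law p i (j, ts) = 0.
Proof.
  intros Hj. unfold A_law. replace (length ts + 2 - 1)%nat with (S (length ts)) by lia.
  replace (Nat.ltb j (S (length ts))) with false; auto.
  symmetry; apply Nat.ltb_nlt; auto.
Qed.

Lemma A_law_nonneg p i c : (forall n, 0 <= p n) -> 0 <= A_law p i c.
Proof.
  intros Hp. destruct c as [j ts]. destruct (Nat.lt_decidable j (S (length ts))).
  - rewrite A_law_val; auto. apply Rmult_le_pos; auto. apply forest_nonneg; auto.
  - rewrite A_law_zero; auto; lra.
Qed.

Lemma NoDup_confs k h : NoDup (confs k h).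
Proof.
  apply NoDup_flat_map.
  - apply NoDup_lists_upto, NoDup_trees.
  - intros ts _. apply NoDup_map_inj; [intros a b E; injection E; auto|apply seq_NoDup].
  - intros x y z _ _ Hx Hy. apply in_map_iff in Hx, Hy.
    destruct Hx as [a [<- _]]; destruct Hy as [b [E _]]. injection E; auto.
Qed.

Lemma confs_cover p i (G : list tree -> R) (L : list conf) :
  exists k h, forall c, In c L -> A_law p i c * G (snd c) <> 0 -> In c (confs k h).
Proof.
  destruct (trees_cover (concat (map snd L))) as [k1 [h Hk1]].
  set (k2 := list_max (map (fun c => length (snd c)) L)).
  exists (max k1 k2), h. intros [j ts] Hc Hne.
  destruct (Nat.lt_decidable j (S (length ts))) as [Hj|Hj];
    [|rewrite A_law_zero in Hne; auto; lra].
  unfold confs. apply in_flat_map. exists ts. split.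
  - apply in_lists_upto. split.
    + assert (length ts <= k2)%nat; [|lia].
      assert (Hm := proj1 (list_max_le (map (fun c => length (snd c)) L) k2) (le_n _)).
      rewrite Forall_forall in Hm. apply Hm. apply in_map_iff. exists (j, ts); auto.
    + intros t Ht. apply trees_incl with k1 h; [lia|lia|]. apply Hk1.
      apply in_concat. exists ts; split; auto. apply in_map_iff. exists (j, ts); auto.
  - apply in_map_iff. exists j; split; auto. apply in_seq; lia.
Qed.

Lemma lsum_const {T} (c : R) (l : list T) : lsum (fun _ => c) l = INR (length l) * c.
Proof. induction l; simpl length; [simpl; ring|]. rewrite S_INR. simpl. rewrite IHl; ring. Qed.

Definition cc (p : nat -> R) (m : nat) : R := INR (S m) * p (S m).

Lemma lsum_confs p i (G : list tree -> R) (rho : tree -> R) k h :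
  (forall ts, forest_weight p ts * G ts = lprod rho ts) ->
  lsum (fun c => A_law p i c * G (snd c)) (confs k h)
  = psum (fun m => cc p m * (lsum rho (trees k h)) ^ m) (S k).
Proof.
  intros HG. unfold confs. rewrite lsum_flat_map.
  rewrite (lsum_ext _ (fun ts => cc p (length ts) * lprod rho ts)).
  - rewrite lsum_upto. reflexivity.
  - intros ts _. rewrite lsum_map.
    rewrite (lsum_ext _ (fun _ => p (S (length ts)) * forest_weight p ts * G ts)).
    + rewrite lsum_const, seq_length. unfold cc. rewrite <- HG. ring.
    + intros j Hj. apply in_seq in Hj. simpl snd. rewrite A_law_val; auto; lia.
Qed.

Definition Unode (c : nat -> R) (rho : tree -> R) (t : tree) : R :=
  match t with Node ts => c (length ts) * lprod rho ts end.

Lemma nnsum_conf p i (G : list tree -> R) (rho : tree -> R) X DX :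
  (forall n, 0 <= p n) -> (forall t, 0 <= rho t) -> (forall ts, 0 <= G ts) ->
  (forall ts, forest_weight p ts * G ts = lprod rho ts) ->
  tsup rho X -> X <= 1 -> infinite_sum (fun m => cc p m * X ^ m) DX ->
  nnsum (fun c => A_law p i c * G (snd c)) = DX.
Proof.
  intros Hp Hrho HG HfG HX HX1 HD.
  assert (Hcc : forall n, 0 <= cc p n) by (intros; unfold cc; apply Rmult_le_pos; auto; apply pos_INR).
  assert (HU : tsup (Unode (cc p) rho) DX).
  { apply (tsup_fix _ rho (cc p) X); auto. }
  assert (HUnn : forall t, 0 <= Unode (cc p) rho t).
  { intros [ts]; simpl. apply Rmult_le_pos; auto. apply lprod_nonneg; auto. }
  assert (Heq : forall k h, lsum (fun c => A_law p i c * G (snd c)) (confs k h)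
                           = lsum (Unode (cc p) rho) (trees k (S h))).
  { intros k h. rewrite (lsum_confs p i G rho); auto.
    rewrite (lsum_trees_S _ rho (cc p)); auto. }
  apply nnsum_enum with (E := confs).
  - intros c. apply Rmult_le_pos; auto. apply A_law_nonneg; auto.
  - apply NoDup_confs.
  - intros L _. apply confs_cover.
  - intros k h. rewrite Heq. apply HU.
  - intros eps He. destruct (proj2 HU eps He) as [k [h Hk]]. exists k, h. rewrite Heq.
    eapply Rlt_le_trans; [exact Hk|]. apply lsum_trees_mono; auto.
Qed.

Lemma isum_minus a b la lb : infinite_sum a la -> infinite_sum b lb ->
  infinite_sum (fun n => a n - b n) (la - lb).
Proof.
  intros Ha Hb eps He. destruct (Ha (eps/2)) as [N1 H1]; [lra|]. destruct (Hb (eps/2)) as [N2 H2]; [lra|].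
  exists (max N1 N2). intros n Hn. specialize (H1 n ltac:(lia)). specialize (H2 n ltac:(lia)).
  unfold Rdist in *. rewrite !sum_f_psum in *. rewrite psum_minus.
  apply Rabs_def2 in H1, H2. apply Rabs_def1; lra.
Qed.

Lemma small_mult K eps : 0 <= K -> 0 < eps -> K * (eps / (K + 1)) <= eps.
Proof.
  intros HK He. unfold Rdiv. rewrite <- Rmult_assoc, (Rmult_comm K), Rmult_assoc.
  assert (K * / (K + 1) <= 1).
  { apply Rmult_le_reg_r with (K + 1); [lra|]. rewrite Rmult_assoc, Rinv_l; lra. }
  replace eps with (eps * 1) at 2 by ring. apply Rmult_le_compat_l; lra.
Qed.

Lemma diff_sup (c : nat -> R) (s1 s0 : nat -> nat -> R) Sx Z DS DZ :
  (forall n, 0 <= c n) ->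
  (forall k h, 0 <= s0 k h <= s1 k h) -> (forall k h, s1 k h - s0 k h <= Sx - Z) ->
  (forall k h, s0 k h <= Z) -> (forall k h, s1 k h <= Sx) -> Sx <= 1 -> 0 <= Z <= Sx ->
  (forall eps, 0 < eps -> exists k0 h0, forall k h, (k0 <= k)%nat -> (h0 <= h)%nat -> Sx - eps < s1 k h) ->
  infinite_sum (fun m => c m * Sx ^ m) DS -> infinite_sum (fun m => c m * Z ^ m) DZ ->
  (forall k h, psum (fun m => c m * s1 k h ^ m) (S k) - psum (fun m => c m * s0 k h ^ m) (S k) <= DS - DZ) /\
  (forall eps, 0 < eps -> exists k h,
     DS - DZ - eps < psum (fun m => c m * s1 k h ^ m) (S k) - psum (fun m => c m * s0 k h ^ m) (S k)).
Proof.
  intros Hc Hs Hd H0 H1 HS HZ Happ HDS HDZ.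
  assert (Hdiff := isum_minus _ _ _ _ HDS HDZ). simpl in Hdiff.
  assert (Hdnn : forall m, 0 <= c m * Sx ^ m - c m * Z ^ m).
  { intros m. rewrite <- Rmult_minus_distr_l. apply Rmult_le_pos; auto.
    assert (Z ^ m <= Sx ^ m) by (apply pow_incr; lra). lra. }
  split.
  - intros k h. rewrite <- psum_minus. eapply Rle_trans; [|apply (isum_le _ _ Hdnn Hdiff (S k))].
    apply psum_le. intros m _. rewrite <- !Rmult_minus_distr_l. apply Rmult_le_compat_l; auto.
    specialize (Hs k h). apply pow_diff_mono; auto; lra.
  - intros eps He. destruct (isum_approx _ _ (eps/2) Hdiff) as [N HN]; [lra|].
    set (K := psum (fun m => c m * INR m) N).
    assert (K0 : 0 <= K) by (apply psum_nonneg; intros; apply Rmult_le_pos; auto; apply pos_INR).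
    destruct (Happ (eps / 2 / (K + 1))) as [k0 [h0 Hk0]]; [apply Rdiv_lt_0_compat; lra|].
    exists (max k0 N), h0. specialize (Hk0 (max k0 N) h0 ltac:(lia) ltac:(lia)).
    set (k := max k0 N) in *. specialize (Hs k h0). specialize (H0 k h0). specialize (H1 k h0).
    set (a := s1 k h0) in *. set (b := s0 k h0) in *.
    rewrite <- psum_minus.
    assert (psum (fun m => c m * a ^ m - c m * b ^ m) N <= psum (fun m => c m * a ^ m - c m * b ^ m) (S k)).
    { apply psum_mono; [|lia]. intros m. rewrite <- Rmult_minus_distr_l. apply Rmult_le_pos; auto.
      assert (b ^ m <= a ^ m) by (apply pow_incr; lra). lra. }
    assert (psum (fun m => c m * Sx ^ m - c m * Z ^ m) N - K * (Sx - a) <= psum (fun m => c m * a ^ m - c m * b ^ m) N).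
    { unfold K. rewrite Rmult_comm, <- psum_scal, <- psum_minus. apply psum_le. intros m _.
      assert (Sx ^ m - a ^ m <= INR m * (Sx - a)) by (apply pow_diff_le; lra).
      assert (b ^ m <= Z ^ m) by (apply pow_incr; lra).
      assert (c m * (Sx ^ m - a ^ m) <= c m * (INR m * (Sx - a))) by (apply Rmult_le_compat_l; auto).
      assert (c m * b ^ m <= c m * Z ^ m) by (apply Rmult_le_compat_l; auto).
      nra. }
    assert (K * (Sx - a) <= eps / 2).
    { assert (K * (Sx - a) <= K * (eps / 2 / (K + 1))) by (apply Rmult_le_compat_l; lra).
      pose proof (small_mult K (eps/2) K0 ltac:(lra)). lra. }
    specialize (HN N (le_n _)). lra.
Qed.

Lemma tsup_unique W X Y : tsup W X -> tsup W Y -> X = Y.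
Proof.
  intros [A1 A2] [B1 B2]. destruct (Rtotal_order X Y) as [H|[H|H]]; auto.
  - destruct (B2 (Y - X)) as [k [h Hk]]; [lra|]. specialize (A1 k h); lra.
  - destruct (A2 (X - Y)) as [k [h Hk]]; [lra|]. specialize (B1 k h); lra.
Qed.

Lemma tsup_nnsum W X : (forall t, 0 <= W t) -> tsup W X -> nnsum W = X.
Proof.
  intros HW [H1 H2]. apply nnsum_enum with (E := trees); auto.
  - apply NoDup_trees.
  - intros L _. destruct (trees_cover L) as [k [h H]]. exists k, h. auto.
Qed.

Lemma psum_p_le1 p N : offspring_distribution p -> psum p N <= 1.
Proof. intros [Hp H1]. apply isum_le; auto. Qed.

Lemma gw_sum_le1 p k h : offspring_distribution p -> lsum (gw_weight p) (trees k h) <= 1.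
Proof.
  intros Hod. pose proof (proj1 Hod) as Hp. induction h.
  - rewrite lsum_trees_0, gw_node. simpl. rewrite Rmult_1_r.
    pose proof (psum_p_le1 p 1 Hod). unfold psum in H; simpl in H. lra.
  - rewrite (lsum_trees_S _ (gw_weight p) p); [|apply gw_node].
    fold (psum (fun j => p j * lsum (gw_weight p) (trees k h) ^ j) (S k)).
    eapply Rle_trans; [|apply (psum_p_le1 p (S k) Hod)]. apply psum_le. intros n _.
    assert (0 <= lsum (gw_weight p) (trees k h)) by (apply lsum_nonneg; intros; apply gw_nonneg; auto).
    assert (lsum (gw_weight p) (trees k h) ^ n <= 1) by (apply pow_le_one; lra).
    specialize (Hp n). nra.
Qed.

Lemma sum_le_gw p (W : tree -> R) k h : offspring_distribution p -> (forall t, 0 <= W t <= gw_weight p t) ->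
  lsum W (trees k h) <= 1.
Proof.
  intros Hod HW. eapply Rle_trans; [|apply (gw_sum_le1 p k h Hod)]. apply lsum_le. intros; apply HW.
Qed.

Definition Wz (p : nat -> R) (z : R) (t : tree) : R := gw_weight p t * z ^ tree_edges t.

Lemma Wz_node p z ts : Wz p z (Node ts) = p (length ts) * lprod (fun t => z * Wz p z t) ts.
Proof.
  unfold Wz. rewrite gw_node, pow_edges_node, Rmult_assoc, lprod_mult. f_equal.
  apply lprod_ext. intros; unfold Wz; ring.
Qed.

Theorem comb_A p i z F :
  offspring_distribution p -> 0 <= z <= 1 ->
  (forall x, 0 <= x <= 1 -> infinite_sum (fun k => p k * x ^ k) (F x)) ->
  exists X, 0 <= X <= z /\ X = z * F X /\
    forall DX, infinite_sum (fun m => cc p m * X ^ m) DX -> A_size_gf p i z = DX.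
Proof.
  intros Hod Hz HF. pose proof (proj1 Hod) as Hp.
  set (rho := fun t => z * Wz p z t).
  assert (Hrho : forall t, 0 <= rho t <= gw_weight p t).
  { intros t. unfold rho, Wz. assert (0 <= gw_weight p t) by (apply gw_nonneg; auto).
    assert (0 <= z ^ tree_edges t <= 1) by (split; [apply pow_le|apply pow_le_one]; lra).
    destruct H0, Hz. split; [apply Rmult_le_pos; [lra|apply Rmult_le_pos; lra]|].
    assert (gw_weight p t * z ^ tree_edges t <= gw_weight p t) by nra.
    assert (0 <= gw_weight p t * z ^ tree_edges t) by nra. nra. }
  destruct (tsup_exists rho 1) as [X HX]. { intros; apply (sum_le_gw p); auto. }
  assert (X0 : 0 <= X) by (eapply tsup_nonneg; [|exact HX]; apply Hrho).
  assert (X1 : X <= 1).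
  { destruct (Rle_lt_dec X 1) as [|Hlt]; auto.
    destruct (proj2 HX (X - 1)) as [k [h Hk]]; [lra|]. pose proof (sum_le_gw p rho k h Hod Hrho); lra. }
  assert (HW : tsup (Wz p z) (F X)).
  { apply (tsup_fix _ rho p X); [exact Hp|intros; apply Hrho|intros ts; apply Wz_node|exact HX|exact X1|apply HF; lra]. }
  assert (HX' : tsup rho (z * F X)) by (apply tsup_scal; [lra|exact HW]).
  exists X. split; [|split].
  - split; auto. destruct (Rle_lt_dec X z) as [|Hlt]; auto.
    destruct (proj2 HX (X - z)) as [k [h Hk]]; [lra|].
    assert (lsum rho (trees k h) <= z * lsum (gw_weight p) (trees k h)).
    { rewrite <- lsum_scal. apply lsum_le. intros t _. unfold rho, Wz.
      assert (0 <= gw_weight p t) by (apply gw_nonneg; auto).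
      assert (z ^ tree_edges t <= 1) by (apply pow_le_one; lra).
      apply Rmult_le_compat_l; [lra|]. nra. }
    pose proof (gw_sum_le1 p k h Hod).
    assert (z * lsum (gw_weight p) (trees k h) <= z * 1) by (apply Rmult_le_compat_l; lra). lra.
  - eapply tsup_unique; eauto.
  - intros DX HDX. unfold A_size_gf.
    change (nnsum (fun c => A_law p i c * (fun ts => z ^ tree_edges (Node ts)) (snd c)) = DX).
    apply (nnsum_conf p i _ rho X); [exact Hp|intros; apply Hrho|intros; apply pow_le; lra| |exact HX|exact X1|exact HDX].
    intros ts. rewrite forest_lprod, pow_edges_node, lprod_mult. apply lprod_ext.
      intros t; unfold rho, Wz; ring.
Qed.

Definition un (p : nat -> R) (n : nat) (t : tree) : R :=
  gw_weight p t * (1 - ind0 (Nat.ltb 0 (tree_level n t))).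

Lemma un_node p n ts : un p (S n) (Node ts) = p (length ts) * lprod (un p n) ts.
Proof.
  unfold un. rewrite gw_node, level_pos_node. replace (1 - (1 - lprod (fun t => 1 - ind0 (0 <? tree_level n t)) ts))
   with (lprod (fun t => 1 - ind0 (0 <? tree_level n t)) ts) by ring.
  rewrite Rmult_assoc, lprod_mult. auto.
Qed.

Lemma un_bounds p n t : (forall k, 0 <= p k) -> 0 <= un p n t <= gw_weight p t.
Proof.
  intros Hp. unfold un. assert (0 <= gw_weight p t) by (apply gw_nonneg; auto).
  destruct (Nat.ltb 0 (tree_level n t)); unfold ind0; lra.
Qed.

Lemma un_0 p t : un p 0 t = 0.
Proof. unfold un. destruct t; simpl. unfold ind0; simpl; ring. Qed.

Theorem comb_B p F :
  offspring_distribution p ->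
  (forall x, 0 <= x <= 1 -> infinite_sum (fun k => p k * x ^ k) (F x)) ->
  tsup (gw_weight p) (nnsum (gw_weight p)) /\ 0 <= nnsum (gw_weight p) <= 1 /\ nnsum (gw_weight p) = F (nnsum (gw_weight p)) /\ (forall n, tsup (un p n) (nnsum (un p n)) /\ 0 <= nnsum (un p n) <= nnsum (gw_weight p)) /\ nnsum (un p 0) = 0 /\ (forall n, nnsum (un p (S n)) = F (nnsum (un p n))).
Proof.
  intros Hod HF. pose proof (proj1 Hod) as Hp.
  assert (Hex : forall W, (forall t, 0 <= W t <= gw_weight p t) -> tsup W (nnsum W) /\ 0 <= nnsum W <= 1).
  { intros W HW. destruct (tsup_exists W 1) as [X HX]. { intros; apply (sum_le_gw p); auto. }
    rewrite (tsup_nnsum W X); auto; [|intros; apply HW]. split; auto. split.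
    - eapply tsup_nonneg; [|exact HX]. intros; apply HW.
    - destruct (Rle_lt_dec X 1) as [|Hlt]; auto.
      destruct (proj2 HX (X - 1)) as [k [h Hk]]; [lra|]. pose proof (sum_le_gw p W k h Hod HW); lra. }
  assert (HG : forall t, 0 <= gw_weight p t <= gw_weight p t) by (intros; split; [apply gw_nonneg; auto|lra]).
  destruct (Hex _ HG) as [HS HS1].
  assert (Hun : forall n, tsup (un p n) (nnsum (un p n)) /\ 0 <= nnsum (un p n) <= 1).
  { intros n. apply Hex. intros; apply un_bounds; auto. }
  split; [auto|split; [auto|split; [|split; [|split]]]].
  - eapply tsup_unique; [exact HS|]. apply (tsup_fix _ (gw_weight p) p (nnsum (gw_weight p)));
      [exact Hp|intros; apply gw_nonneg; auto|apply gw_node|exact HS|apply HS1|apply HF; lra].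
  - intros n. split; [apply Hun|]. split; [apply Hun|].
    destruct (Rle_lt_dec (nnsum (un p n)) (nnsum (gw_weight p))) as [|Hlt]; auto.
    destruct (proj2 (proj1 (Hun n)) (nnsum (un p n) - nnsum (gw_weight p))) as [k [h Hk]]; [lra|].
    pose proof (proj1 HS k h).
    assert (lsum (un p n) (trees k h) <= lsum (gw_weight p) (trees k h)) by (apply lsum_le; intros; apply un_bounds; auto).
    lra.
  - apply tsup_nnsum; [intros; apply un_bounds; auto|]. split.
    + intros k h. rewrite (lsum_ext _ (fun _ => 0)); [rewrite lsum_const; lra|]. intros; apply un_0.
    + intros eps He. exists 0%nat, 0%nat. rewrite (lsum_ext _ (fun _ => 0)); [rewrite lsum_const; lra|]. intros; apply un_0.
  - intros n. eapply tsup_unique; [apply Hun|]. apply (tsup_fix _ (un p n) p (nnsum (un p n)));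
      [exact Hp|intros; apply un_bounds; auto|apply un_node|apply Hun|apply Hun|apply HF; apply Hun].
Qed.

Theorem comb_surv p i n F DS DZ :
  offspring_distribution p ->
  (forall x, 0 <= x <= 1 -> infinite_sum (fun k => p k * x ^ k) (F x)) ->
  infinite_sum (fun m => cc p m * (nnsum (gw_weight p)) ^ m) DS ->
  infinite_sum (fun m => cc p m * (nnsum (un p n)) ^ m) DZ ->
  A_survival p i (S n) = DS - DZ.
Proof.
  intros Hod HF HDS HDZ. pose proof (proj1 Hod) as Hp.
  destruct (comb_B p F Hod HF) as [HS [HS1 [_ [HZ _]]]].
  destruct (HZ n) as [HZt HZ1].
  set (Sx := nnsum (gw_weight p)) in *. set (Z := nnsum (un p n)) in *.
  set (G0 := fun ts : list tree => lprod (fun t => 1 - ind0 (Nat.ltb 0 (tree_level n t))) ts).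
  unfold A_survival.
  change (nnsum (fun c => A_law p i c * ind0 (Nat.ltb 0 (tree_level (S n) (Node (snd c))))) = DS - DZ).
  assert (Hw : forall c, A_law p i c * ind0 (Nat.ltb 0 (tree_level (S n) (Node (snd c))))
                         = A_law p i c * (fun _ => 1) (snd c) - A_law p i c * G0 (snd c)).
  { intros c. rewrite level_pos_node. unfold G0. ring. }
  set (s1 := fun k h => lsum (gw_weight p) (trees k h)).
  set (s0 := fun k h => lsum (un p n) (trees k h)).
  assert (Hsum : forall k h, lsum (fun c => A_law p i c * ind0 (Nat.ltb 0 (tree_level (S n) (Node (snd c))))) (confs k h)
     = psum (fun m => cc p m * s1 k h ^ m) (S k) - psum (fun m => cc p m * s0 k h ^ m) (S k)).
  { intros k h. rewrite (lsum_ext _ _ _ (fun c _ => Hw c)), lsum_minus.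
    rewrite (lsum_confs p i (fun _ => 1) (gw_weight p)), (lsum_confs p i G0 (un p n)); auto.
    - intros ts. unfold G0, un. rewrite forest_lprod, lprod_mult. auto.
    - intros ts. rewrite forest_lprod; ring. }
  assert (Hcc : forall m, 0 <= cc p m) by (intros; unfold cc; apply Rmult_le_pos; auto; apply pos_INR).
  assert (Hs : forall k h, 0 <= s0 k h <= s1 k h).
  { intros k h; split; [apply lsum_nonneg; intros; apply un_bounds; auto|apply lsum_le; intros; apply un_bounds; auto]. }
  assert (Hmono : forall k h k' h', (k <= k')%nat -> (h <= h')%nat -> s1 k h - s0 k h <= s1 k' h' - s0 k' h').
  { intros. unfold s1, s0. rewrite <- !lsum_minus. apply lsum_trees_mono; auto.
    intros t; pose proof (un_bounds p n t Hp); lra. }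
  assert (Hd : forall k h, s1 k h - s0 k h <= Sx - Z).
  { intros k h. destruct (Rle_lt_dec (s1 k h - s0 k h) (Sx - Z)) as [|Hlt]; auto.
    destruct (tsup_approx (un p n) Z (s1 k h - s0 k h - (Sx - Z))) as [k0 [h0 Hk0]]; auto; [intros; apply un_bounds; auto|lra|].
    specialize (Hk0 (max k k0) (max h h0) ltac:(lia) ltac:(lia)).
    pose proof (Hmono k h (max k k0) (max h h0) ltac:(lia) ltac:(lia)).
    pose proof (proj1 HS (max k k0) (max h h0)). unfold s0, s1 in *. lra. }
  assert (Hap : forall eps, 0 < eps -> exists k0 h0, forall k h, (k0 <= k)%nat -> (h0 <= h)%nat -> Sx - eps < s1 k h).
  { intros eps He. apply tsup_approx; auto. intros; apply gw_nonneg; auto. }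
  destruct (diff_sup (cc p) s1 s0 Sx Z DS DZ Hcc Hs Hd (fun k h => proj1 HZt k h) (fun k h => proj1 HS k h)
              (proj2 HS1) HZ1 Hap HDS HDZ) as [U A].
  { apply nnsum_enum with (E := confs).
    + intros c. apply Rmult_le_pos; [apply A_law_nonneg; auto|].
      unfold ind0; destruct (Nat.ltb _ _); lra.
    + apply NoDup_confs.
    + intros L _. apply (confs_cover p i (fun ts => ind0 (Nat.ltb 0 (tree_level (S n) (Node ts))))).
    + intros k h. rewrite Hsum. apply U.
    + intros eps He. destruct (A eps He) as [k [h Hk]]. exists k, h. rewrite Hsum. auto. }
Qed.

Lemma Rpow_pos x a : 0 < x -> 0 < Rpower x a.
Proof. intros; unfold Rpower; apply exp_pos. Qed.

Lemma Rpow_mul x y a : 0 < x -> 0 < y -> Rpower (x * y) a = Rpower x a * Rpower y a.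
Proof. intros; rewrite Rpower_mult_distr; auto. Qed.

Lemma Rpow_S x a : 0 < x -> Rpower x (a + 1) = x * Rpower x a.
Proof. intros; rewrite Rpower_plus, Rpower_1; auto; ring. Qed.

Lemma Rpow_1 a : Rpower 1 a = 1.
Proof. unfold Rpower; rewrite ln_1, Rmult_0_r, exp_0; auto. Qed.

Lemma Rpow_lt1 x a : 0 < x < 1 -> 0 < a -> Rpower x a < 1.
Proof.
  intros Hx Ha. rewrite <- (Rpow_1 a). apply Rlt_Rpower_l; lra.
Qed.

Lemma Rpow_incr x y a : 0 <= a -> 0 < x <= y -> Rpower x a <= Rpower y a.
Proof. intros; apply Rle_Rpower_l; auto. Qed.

Lemma Rpow_strict x y a : 0 < a -> 0 < x < y -> Rpower x a < Rpower y a.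
Proof. intros; apply Rlt_Rpower_l; auto. Qed.

Lemma Rpow_cont c a : 0 < c -> forall eps, 0 < eps -> exists eta, 0 < eta /\
  forall u, Rabs (u - c) < eta -> Rabs (Rpower u a - Rpower c a) < eps.
Proof.
  intros Hc eps He. pose proof (derivable_pt_lim_power c a Hc) as D.
  set (l := a * Rpower c (a - 1)) in *.
  destruct (D 1 Rlt_0_1) as [del Hdel].
  exists (Rmin del (eps / (Rabs l + 1))). split.
  { apply Rmin_pos; [apply cond_pos|apply Rdiv_lt_0_compat; [lra|pose proof (Rabs_pos l); lra]]. }
  intros u Hu. destruct (Req_dec u c) as [->|Hne].
  - rewrite Rminus_diag, Rabs_R0; auto.
  - set (t := u - c). assert (Ht : t <> 0) by (unfold t; lra).
    assert (Htd : Rabs t < del) by (eapply Rlt_le_trans; [exact Hu|apply Rmin_l]).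
    specialize (Hdel t Ht Htd). replace (c + t) with u in Hdel by (unfold t; ring).
    assert (E : Rpower u a - Rpower c a = t * ((Rpower u a - Rpower c a) / t)) by (field; auto).
    rewrite E, Rabs_mult.
    assert (Rabs ((Rpower u a - Rpower c a) / t) <= Rabs l + 1).
    { apply Rabs_def2 in Hdel. destruct Hdel.
      destruct (Rcase_abs ((Rpower u a - Rpower c a) / t)) as [N|P];
      [rewrite Rabs_left; auto|rewrite Rabs_right; auto];
      pose proof (Rabs_pos l); pose proof (Rle_abs l); pose proof (Rle_abs (-l)); rewrite Rabs_Ropp in *; lra. }
    assert (Rabs t < eps / (Rabs l + 1)) by (eapply Rlt_le_trans; [exact Hu|apply Rmin_r]).
    assert (0 < Rabs l + 1) by (pose proof (Rabs_pos l); lra).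
    apply Rle_lt_trans with (Rabs t * (Rabs l + 1)).
    + apply Rmult_le_compat_l; auto. apply Rabs_pos.
    + apply Rmult_lt_reg_r with (/ (Rabs l + 1)); [apply Rinv_0_lt_compat; lra|].
      rewrite Rmult_assoc, Rinv_r; [|lra]. unfold Rdiv in H0. lra.
Qed.

Lemma Rpow_deriv1 A : forall eps, 0 < eps -> exists del, 0 < del /\
  forall t, t <> 0 -> Rabs t < del -> Rabs ((Rpower (1 + t) A - 1) / t - A) < eps.
Proof.
  intros eps He. pose proof (derivable_pt_lim_power 1 A Rlt_0_1) as D.
  rewrite Rpow_1, Rmult_1_r in D. destruct (D eps He) as [del Hdel].
  exists del; split; [apply cond_pos|]. intros t Ht Htd. specialize (Hdel t Ht Htd).
  rewrite Rpow_1 in Hdel. auto.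
Qed.

Definition AH (a : R) (l1 h d : R -> R) : Prop :=
  0 < a /\ slowly_varying_0 l1 /\ h 0 = 0 /\
  (forall x, 0 < x <= 1 -> h x = Rpower x (a + 1) * l1 x) /\
  (forall x y, 0 <= x <= y -> y <= 1 -> 0 < y -> h y - h x <= (y - x) * d y) /\
  (forall x y, 0 < x <= y -> y <= 1 -> (y - x) * d x <= h y - h x) /\
  (forall x y, 0 < x <= y -> y <= 1 -> d x <= d y).

Definition gf (h : R -> R) (x : R) : R := h x / x.

Lemma g_eq a l1 h d x : AH a l1 h d -> 0 < x <= 1 -> gf h x = Rpower x a * l1 x.
Proof.
  intros (Ha & Hsv & H0 & Hh & _) Hx. unfold gf. rewrite Hh, Rpow_S; auto; [|lra]. field; lra.
Qed.

Lemma h_eq (h : R -> R) x : 0 < x -> h x = x * gf h x.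
Proof. intros; unfold gf; field; lra. Qed.

Lemma g_rv a l1 h d : AH a l1 h d -> forall lam, 0 < lam -> forall eps, 0 < eps ->
  exists del, 0 < del /\ forall x, 0 < x < del -> Rabs (gf h (lam * x) / gf h x - Rpower lam a) < eps.
Proof.
  intros HA lam Hl eps He. pose proof HA as (Ha & Hsv & _).
  assert (Hp := Rpow_pos lam a Hl).
  destruct (Hsv lam Hl (eps / Rpower lam a)) as [d0 [Hd0 Hx]]; [apply Rdiv_lt_0_compat; auto|].
  exists (Rmin d0 (Rmin 1 (/ lam))). split.
  { apply Rmin_pos; auto. apply Rmin_pos; [lra|apply Rinv_0_lt_compat; auto]. }
  intros x [Hx0 Hxd].
  assert (x < d0) by (eapply Rlt_le_trans; [exact Hxd|apply Rmin_l]).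
  assert (x < 1) by (eapply Rlt_le_trans; [exact Hxd|eapply Rle_trans; [apply Rmin_r|apply Rmin_l]]).
  assert (x < / lam) by (eapply Rlt_le_trans; [exact Hxd|eapply Rle_trans; [apply Rmin_r|apply Rmin_r]]).
  assert (lam * x < 1).
  { apply Rmult_lt_compat_l with (r := lam) in H1; auto. rewrite Rinv_r in H1; lra. }
  assert (0 < lam * x) by (apply Rmult_lt_0_compat; auto).
  rewrite (g_eq a l1 h d), (g_eq a l1 h d); auto; try lra.
  rewrite Rpow_mul; auto.
  assert (Hxp := Rpow_pos x a Hx0).
  replace (Rpower lam a * Rpower x a * l1 (lam * x) / (Rpower x a * l1 x))
    with (Rpower lam a * (l1 (lam * x) / l1 x) * (Rpower x a * / Rpower x a))
    by (unfold Rdiv; rewrite Rinv_mult; ring).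
  rewrite Rinv_r; [|lra]. rewrite Rmult_1_r.
  replace (Rpower lam a * (l1 (lam * x) / l1 x) - Rpower lam a)
    with (Rpower lam a * (l1 (lam * x) / l1 x - 1)) by ring.
  rewrite Rabs_mult, Rabs_right; [|lra].
  specialize (Hx x (conj Hx0 H)).
  apply Rmult_lt_compat_l with (r := Rpower lam a) in Hx; auto.
  replace (Rpower lam a * (eps / Rpower lam a)) with eps in Hx by (field; lra). auto.
Qed.

Lemma g_le_d a l1 h d x : AH a l1 h d -> 0 < x <= 1 -> gf h x <= d x.
Proof.
  intros (Ha & Hsv & H0 & Hh & H2 & H3 & H4) Hx. unfold gf.
  specialize (H2 0 x ltac:(lra) ltac:(lra) ltac:(lra)). rewrite H0 in H2.
  apply Rmult_le_reg_r with x; [lra|]. unfold Rdiv; rewrite Rmult_assoc, Rinv_l; lra.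
Qed.

Lemma g_incr a l1 h d x y : AH a l1 h d -> 0 < x <= y -> y <= 1 -> gf h x <= gf h y.
Proof.
  intros HA Hx Hy. pose proof (g_le_d a l1 h d x HA ltac:(lra)).
  pose proof HA as (Ha & Hsv & H0 & Hh & H2 & H3 & H4).
  specialize (H3 x y Hx Hy). rewrite (h_eq h x), (h_eq h y) in H3; try lra.
  assert ((y - x) * gf h x <= (y - x) * d x) by (apply Rmult_le_compat_l; lra).
  nra.
Qed.

Lemma half_contract a l1 h d : AH a l1 h d -> exists del r, 0 < del /\ 0 <= r < 1 /\
  forall x, 0 < x < del -> gf h x <> 0 -> Rabs (gf h (/2 * x)) <= r * Rabs (gf h x).
Proof.
  intros HA. pose proof HA as (Ha & _).
  set (c := Rpower (/2) a).
  assert (Hc : 0 < c < 1) by (split; [apply Rpow_pos; lra|apply Rpow_lt1; lra]).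
  destruct (g_rv a l1 h d HA (/2) ltac:(lra) ((1 - c) / 2) ltac:(lra)) as [del [Hdel Hx]].
  exists del, ((1 + c) / 2). split; auto. split; [lra|].
  intros x Hx0 Hg. specialize (Hx x Hx0). fold c in Hx.
  apply Rabs_def2 in Hx. destruct Hx as [Hx1 Hx2].
  assert (Rabs (gf h (/ 2 * x) / gf h x) <= (1 + c) / 2).
  { destruct (Rcase_abs (gf h (/ 2 * x) / gf h x)); [rewrite Rabs_left|rewrite Rabs_right]; auto; lra. }
  replace (gf h (/ 2 * x)) with (gf h (/ 2 * x) / gf h x * gf h x) by (field; auto).
  rewrite Rabs_mult. apply Rmult_le_compat_r; auto. apply Rabs_pos.
Qed.

Lemma pow_le1' x m : 0 <= x <= 1 -> x ^ m <= 1.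
Proof. intros H. rewrite <- (pow1 m). apply pow_incr; lra. Qed.

Lemma iter_contract (g : R -> R) del r x1 : 0 <= r ->
  (forall x, 0 < x < del -> g x <> 0 -> Rabs (g (/2 * x)) <= r * Rabs (g x)) ->
  0 < x1 < del -> (forall x, 0 < x <= x1 -> g x <> 0) ->
  forall n, Rabs (g ((/2) ^ n * x1)) <= r ^ n * Rabs (g x1).
Proof.
  intros Hr Hc Hx1 Hnz n. induction n; simpl.
  - rewrite !Rmult_1_l; lra.
  - assert (0 < (/2) ^ n) by (apply pow_lt; lra).
    assert ((/2) ^ n <= 1) by (apply pow_le1'; lra).
    rewrite Rmult_assoc. eapply Rle_trans; [apply Hc|].
    + split; [apply Rmult_lt_0_compat; lra|].
      eapply Rle_lt_trans; [|apply Hx1]. rewrite <- (Rmult_1_l x1) at 2. apply Rmult_le_compat_r; lra.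
    + apply Hnz. split; [apply Rmult_lt_0_compat; lra|]. rewrite <- (Rmult_1_l x1) at 2. apply Rmult_le_compat_r; lra.
    + rewrite Rmult_assoc. apply Rmult_le_compat_l; auto.
Qed.

Lemma small_pow r B c : 0 <= r < 1 -> 0 <= B -> 0 < c -> exists n, r ^ n * B < c.
Proof.
  intros Hr HB Hc. destruct (pow_lt_1_zero r ltac:(rewrite Rabs_right; lra) (c / (B + 1))) as [N HN].
  { apply Rdiv_lt_0_compat; lra. }
  exists N. specialize (HN N (le_n _)). rewrite Rabs_right in HN; [|apply Rle_ge, pow_le; lra].
  assert (r ^ N * B <= c / (B + 1) * B) by (apply Rmult_le_compat_r; lra).
  assert (c / (B + 1) * B < c).
  { assert (B / (B + 1) < 1).
    { apply Rmult_lt_reg_r with (B + 1); [lra|]. unfold Rdiv. rewrite Rmult_assoc, Rinv_l; lra. }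
    replace (c / (B + 1) * B) with (c * (B / (B + 1))) by (field; lra).
    assert (c * (B / (B + 1)) < c * 1) by (apply Rmult_lt_compat_l; lra). lra. }
  destruct (Req_dec B 0) as [->|]; [rewrite Rmult_0_r; lra|].
  assert (r ^ N * B < c / (B + 1) * B) by (apply Rmult_lt_compat_r; lra). lra.
Qed.

Lemma g_nonneg a l1 h d x0 : AH a l1 h d -> 0 < x0 <= 1 -> 0 <= gf h x0.
Proof.
  intros HA Hx0. destruct (Rle_lt_dec 0 (gf h x0)) as [|Hneg]; auto. exfalso.
  destruct (half_contract a l1 h d HA) as [del [r [Hdel [Hr Hc]]]].
  set (x1 := Rmin x0 (del / 2)).
  assert (Hx1 : 0 < x1 <= x0) by (split; [apply Rmin_pos; lra|apply Rmin_l]).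
  assert (Hx1d : x1 < del) by (unfold x1; eapply Rle_lt_trans; [apply Rmin_r|lra]).
  assert (Hle : forall x, 0 < x <= x1 -> gf h x <= gf h x0) by (intros; apply (g_incr a l1 h d); auto; lra).
  assert (Hnz : forall x, 0 < x <= x1 -> gf h x <> 0) by (intros x Hx; specialize (Hle x Hx); lra).
  pose proof (iter_contract (gf h) del r x1 (proj1 Hr) Hc (conj (proj1 Hx1) Hx1d) Hnz) as It.
  destruct (small_pow r (Rabs (gf h x1)) (- gf h x0) Hr (Rabs_pos _) ltac:(lra)) as [n Hn].
  specialize (It n).
  assert (0 < (/2) ^ n) by (apply pow_lt; lra). assert ((/2) ^ n <= 1) by (apply pow_le1'; lra).
  assert (Hxn : 0 < (/2) ^ n * x1 <= x1).
  { split; [apply Rmult_lt_0_compat; lra|]. rewrite <- (Rmult_1_l x1) at 2. apply Rmult_le_compat_r; lra. }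
  specialize (Hle _ Hxn). rewrite Rabs_left in It; lra.
Qed.

Lemma g_pos a l1 h d x0 : AH a l1 h d -> 0 < x0 <= 1 -> 0 < gf h x0.
Proof.
  intros HA Hx0. destruct (Rle_lt_dec (gf h x0) 0) as [Hz|]; auto. exfalso.
  pose proof HA as (Ha & _).
  assert (Hzero : forall x, 0 < x <= x0 -> gf h x = 0).
  { intros x Hx. pose proof (g_nonneg a l1 h d x HA ltac:(lra)).
    pose proof (g_incr a l1 h d x x0 HA Hx ltac:(lra)). lra. }
  set (c := Rpower (/2) a). assert (Hc : 0 < c) by (apply Rpow_pos; lra).
  destruct (g_rv a l1 h d HA (/2) ltac:(lra) c Hc) as [del [Hdel Hx]].
  set (x1 := Rmin x0 (del / 2)).
  assert (Hx1 : 0 < x1 <= x0) by (split; [apply Rmin_pos; lra|apply Rmin_l]).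
  assert (Hx1d : x1 < del) by (unfold x1; eapply Rle_lt_trans; [apply Rmin_r|lra]).
  specialize (Hx x1 (conj (proj1 Hx1) Hx1d)). fold c in Hx.
  rewrite (Hzero x1), (Hzero (/2 * x1)) in Hx; auto; [|lra].
  unfold Rdiv in Hx. rewrite Rmult_0_l, Rminus_0_l, Rabs_Ropp, Rabs_right in Hx; lra.
Qed.

Lemma d_pos a l1 h d x : AH a l1 h d -> 0 < x <= 1 -> 0 < d x.
Proof. intros; pose proof (g_pos a l1 h d x H H0); pose proof (g_le_d a l1 h d x H H0); lra. Qed.

Lemma g_to0 a l1 h d : AH a l1 h d -> forall eps, 0 < eps ->
  exists del, 0 < del /\ forall x, 0 < x < del -> gf h x < eps.
Proof.
  intros HA eps He.
  destruct (half_contract a l1 h d HA) as [del [r [Hdel [Hr Hc]]]].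
  set (x1 := Rmin 1 (del / 2)).
  assert (Hx1 : 0 < x1 <= 1) by (split; [apply Rmin_pos; lra|apply Rmin_l]).
  assert (Hx1d : x1 < del) by (unfold x1; eapply Rle_lt_trans; [apply Rmin_r|lra]).
  assert (Hnz : forall x, 0 < x <= x1 -> gf h x <> 0) by (intros x Hx; pose proof (g_pos a l1 h d x HA ltac:(lra)); lra).
  pose proof (iter_contract (gf h) del r x1 (proj1 Hr) Hc (conj (proj1 Hx1) Hx1d) Hnz) as It.
  destruct (small_pow r (Rabs (gf h x1)) eps Hr (Rabs_pos _) He) as [n Hn].
  specialize (It n).
  assert (0 < (/2) ^ n) by (apply pow_lt; lra). assert ((/2) ^ n <= 1) by (apply pow_le1'; lra).
  assert (Hxn : 0 < (/2) ^ n * x1 <= x1).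
  { split; [apply Rmult_lt_0_compat; lra|]. rewrite <- (Rmult_1_l x1) at 2. apply Rmult_le_compat_r; lra. }
  exists ((/2) ^ n * x1). split; [lra|]. intros x Hx.
  pose proof (g_incr a l1 h d x ((/2) ^ n * x1) HA ltac:(lra) ltac:(lra)).
  pose proof (g_pos a l1 h d ((/2) ^ n * x1) HA ltac:(lra)).
  rewrite Rabs_right in It; lra.
Qed.

Lemma dg_limit a l1 h d : AH a l1 h d -> forall eps, 0 < eps ->
  exists del, 0 < del /\ forall x, 0 < x < del -> Rabs (d x / gf h x - (a + 1)) < eps.
Proof.
  intros HA eps He. pose proof HA as (Ha & Hsv & H0 & Hh & H2 & H3 & H4).
  set (A := a + 1).
  destruct (Rpow_deriv1 A (eps / 2) ltac:(lra)) as [del1 [Hdel1 HD]].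
  set (t := Rmin (del1 / 2) (1 / 2)).
  assert (Ht : 0 < t <= 1/2) by (split; [apply Rmin_pos; lra|apply Rmin_r]).
  assert (Htd : t < del1) by (unfold t; eapply Rle_lt_trans; [apply Rmin_l|lra]).
  set (lam := 1 + t). set (mu := 1 - t).
  assert (HU := HD t ltac:(lra) ltac:(rewrite Rabs_right; lra)).
  assert (HL := HD (- t) ltac:(lra) ltac:(rewrite Rabs_Ropp, Rabs_right; lra)).
  replace (1 + - t) with mu in HL by (unfold mu; ring). fold lam in HU.
  unfold A in HU, HL. rewrite (Rpow_S lam a) in HU by (unfold lam; lra). rewrite (Rpow_S mu a) in HL by (unfold mu; lra).
  assert (Hpl := Rpow_pos lam a ltac:(unfold lam; lra)). assert (Hpm := Rpow_pos mu a ltac:(unfold mu; lra)).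
  destruct (g_rv a l1 h d HA lam ltac:(unfold lam; lra) (eps * t / (2 * lam))) as [d1 [Hd1 R1]].
  { apply Rdiv_lt_0_compat; [nra|unfold lam; lra]. }
  destruct (g_rv a l1 h d HA mu ltac:(unfold mu; lra) (eps * t / (2 * mu))) as [d2 [Hd2 R2]].
  { apply Rdiv_lt_0_compat; [nra|unfold mu; lra]. }
  exists (Rmin d1 (Rmin d2 (/ lam))). split.
  { apply Rmin_pos; auto. apply Rmin_pos; auto. apply Rinv_0_lt_compat; unfold lam; lra. }
  intros x [Hx0 Hxd].
  assert (Xd1 : x < d1) by (eapply Rlt_le_trans; [exact Hxd|apply Rmin_l]).
  assert (Xd2 : x < d2) by (eapply Rlt_le_trans; [exact Hxd|eapply Rle_trans; [apply Rmin_r|apply Rmin_l]]).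
  assert (Xl : x < / lam) by (eapply Rlt_le_trans; [exact Hxd|eapply Rle_trans; [apply Rmin_r|apply Rmin_r]]).
  assert (Hlx : lam * x < 1).
  { apply Rmult_lt_compat_l with (r := lam) in Xl; [|unfold lam; lra]. rewrite Rinv_r in Xl; unfold lam in *; lra. }
  assert (Hx1 : x < 1) by (unfold lam in Hlx; nra).
  specialize (R1 x (conj Hx0 Xd1)). specialize (R2 x (conj Hx0 Xd2)).
  set (G := gf h x) in *. assert (HG : 0 < G) by (apply (g_pos a l1 h d x HA); lra).
  set (Rl := gf h (lam * x) / G) in *. set (Rm := gf h (mu * x) / G) in *.
  assert (E1 : gf h (lam * x) = Rl * G) by (unfold Rl; field; lra).
  assert (E2 : gf h (mu * x) = Rm * G) by (unfold Rm; field; lra).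
  assert (Up : t * d x <= lam * gf h (lam * x) - G).
  { specialize (H3 x (lam * x) ltac:(unfold lam in *; nra) ltac:(lra)).
    rewrite (h_eq h x), (h_eq h (lam * x)) in H3 by (unfold lam in *; nra).
    replace (lam * x - x) with (t * x) in H3 by (unfold lam; ring).
    replace (lam * x * gf h (lam * x) - x * G) with (x * (lam * gf h (lam * x) - G)) in H3 by ring.
    fold G in H3. apply Rmult_le_reg_l with x; auto. nra. }
  assert (Lo : G - mu * gf h (mu * x) <= t * d x).
  { specialize (H2 (mu * x) x ltac:(unfold mu in *; nra) ltac:(lra) Hx0).
    rewrite (h_eq h x), (h_eq h (mu * x)) in H2 by (unfold mu in *; nra).
    replace (x - mu * x) with (t * x) in H2 by (unfold mu; ring).
    replace (x * G - mu * x * gf h (mu * x)) with (x * (G - mu * gf h (mu * x))) in H2 by ring.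
    fold G in H2. apply Rmult_le_reg_l with x; auto. nra. }
  rewrite E1 in Up. rewrite E2 in Lo.
  assert (Q : d x / G = (t * d x) / G / t) by (field; lra).
  apply Rabs_def2 in R1. apply Rabs_def2 in R2. apply Rabs_def2 in HU. apply Rabs_def2 in HL.
  destruct R1 as [R1a R1b], R2 as [R2a R2b], HU as [HUa HUb], HL as [HLa HLb].
  assert (Hup : d x / G <= (lam * Rl - 1) / t).
  { unfold Rdiv. apply Rmult_le_reg_r with (G * t); [nra|].
    replace (d x * / G * (G * t)) with (t * d x) by (field; lra).
    replace ((lam * Rl - 1) * / t * (G * t)) with (lam * (Rl * G) - G) by (field; lra). lra. }
  assert (Hlo : (1 - mu * Rm) / t <= d x / G).
  { unfold Rdiv. apply Rmult_le_reg_r with (G * t); [nra|].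
    replace (d x * / G * (G * t)) with (t * d x) by (field; lra).
    replace ((1 - mu * Rm) * / t * (G * t)) with (G - mu * (Rm * G)) by (field; lra). lra. }
  assert (B1 : (lam * Rl - 1) / t < A + eps).
  { assert (Z1 : lam * Rl < lam * (Rpower lam a + eps * t / (2 * lam))) by (apply Rmult_lt_compat_l; unfold lam in *; lra).
    replace (lam * (Rpower lam a + eps * t / (2 * lam))) with (lam * Rpower lam a + eps * t / 2) in Z1 by (field; unfold lam; lra).
    assert (Z2 : (lam * Rl - 1) / t < (lam * Rpower lam a + eps * t / 2 - 1) / t).
    { unfold Rdiv; apply Rmult_lt_compat_r; [apply Rinv_0_lt_compat; lra|lra]. }
    replace ((lam * Rpower lam a + eps * t / 2 - 1) / t) with ((lam * Rpower lam a - 1) / t + eps / 2) in Z2 by (field; lra).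
    unfold A in *; lra. }
  assert (B2 : A - eps < (1 - mu * Rm) / t).
  { assert (Z1 : mu * Rm < mu * (Rpower mu a + eps * t / (2 * mu))) by (apply Rmult_lt_compat_l; unfold mu in *; lra).
    replace (mu * (Rpower mu a + eps * t / (2 * mu))) with (mu * Rpower mu a + eps * t / 2) in Z1 by (field; unfold mu; lra).
    assert (Z2 : (1 - (mu * Rpower mu a + eps * t / 2)) / t < (1 - mu * Rm) / t).
    { unfold Rdiv; apply Rmult_lt_compat_r; [apply Rinv_0_lt_compat; lra|lra]. }
    replace ((1 - (mu * Rpower mu a + eps * t / 2)) / t) with ((mu * Rpower mu a - 1) / - t - eps / 2) in Z2 by (field; lra).
    unfold A in *; lra. }
  unfold A in *. apply Rabs_def1; lra.
Qed.

Lemma g_unif a l1 h d : AH a l1 h d -> forall c, 0 < c -> forall eps, 0 < eps ->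
  exists del eta, 0 < del /\ 0 < eta /\ forall x u, 0 < x < del -> Rabs (u - c) < eta ->
    Rabs (gf h (u * x) / gf h x - Rpower c a) < eps.
Proof.
  intros HA c Hc eps He. pose proof HA as (Ha & _).
  destruct (Rpow_cont c a Hc (eps / 2) ltac:(lra)) as [eta0 [Heta0 Hcont]].
  set (e1 := Rmin (eta0 / 2) (c / 2)).
  assert (He1 : 0 < e1 <= c / 2) by (split; [apply Rmin_pos; lra|apply Rmin_r]).
  assert (He1' : e1 < eta0) by (unfold e1; eapply Rle_lt_trans; [apply Rmin_l|lra]).
  set (mp := c + e1). set (mm := c - e1).
  assert (Cp := Hcont mp ltac:(unfold mp; rewrite Rabs_right; lra)).
  assert (Cm := Hcont mm ltac:(unfold mm; rewrite Rabs_left1; lra)).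
  destruct (g_rv a l1 h d HA mp ltac:(unfold mp; lra) (eps / 2) ltac:(lra)) as [dp [Hdp Rp]].
  destruct (g_rv a l1 h d HA mm ltac:(unfold mm; lra) (eps / 2) ltac:(lra)) as [dm [Hdm Rm]].
  exists (Rmin (Rmin dp 1) (Rmin dm (/ mp))), e1. split; [|split; [lra|]].
  { apply Rmin_pos; [apply Rmin_pos; lra|]. apply Rmin_pos; auto. apply Rinv_0_lt_compat; unfold mp; lra. }
  intros x u [Hx0 Hxd] Hu. apply Rabs_def2 in Hu. destruct Hu as [Hu1 Hu2].
  assert (Xd1 : x < dp) by (eapply Rlt_le_trans; [exact Hxd|eapply Rle_trans; [apply Rmin_l|apply Rmin_l]]).
  assert (X1 : x < 1) by (eapply Rlt_le_trans; [exact Hxd|eapply Rle_trans; [apply Rmin_l|apply Rmin_r]]).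
  assert (Xd2 : x < dm) by (eapply Rlt_le_trans; [exact Hxd|eapply Rle_trans; [apply Rmin_r|apply Rmin_l]]).
  assert (Xl : x < / mp) by (eapply Rlt_le_trans; [exact Hxd|eapply Rle_trans; [apply Rmin_r|apply Rmin_r]]).
  assert (Hlx : mp * x < 1).
  { apply Rmult_lt_compat_l with (r := mp) in Xl; [|unfold mp; lra]. rewrite Rinv_r in Xl; unfold mp in *; lra. }
  specialize (Rp x (conj Hx0 Xd1)). specialize (Rm x (conj Hx0 Xd2)).
  assert (HG : 0 < gf h x) by (apply (g_pos a l1 h d x HA); lra).
  assert (L1 : gf h (mm * x) <= gf h (u * x)) by (apply (g_incr a l1 h d _ _ HA); unfold mm, mp in *; nra).
  assert (L2 : gf h (u * x) <= gf h (mp * x)) by (apply (g_incr a l1 h d _ _ HA); unfold mm, mp in *; nra).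
  assert (Q1 : gf h (mm * x) / gf h x <= gf h (u * x) / gf h x).
  { unfold Rdiv; apply Rmult_le_compat_r; [left; apply Rinv_0_lt_compat; lra|lra]. }
  assert (Q2 : gf h (u * x) / gf h x <= gf h (mp * x) / gf h x).
  { unfold Rdiv; apply Rmult_le_compat_r; [left; apply Rinv_0_lt_compat; lra|lra]. }
  apply Rabs_def2 in Rp. apply Rabs_def2 in Rm. apply Rabs_def2 in Cp. apply Rabs_def2 in Cm.
  apply Rabs_def1; lra.
Qed.

Definition lim0 (f : R -> R) (L : R) : Prop :=
  forall eps, 0 < eps -> exists del, 0 < del /\ forall x, 0 < x < del -> Rabs (f x - L) < eps.

Lemma lim0_l1 f L : lim0 f L <-> limit1_in f (fun x => 0 < x) L 0.
Proof.
  unfold lim0, limit1_in, limit_in. simpl. unfold Rdist. split.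
  - intros H eps He. destruct (H eps He) as [d [Hd Hx]]. exists d. split; [lra|].
    intros x [Hx0 Hxd]. rewrite Rminus_0_r, Rabs_right in Hxd by lra. apply Hx; lra.
  - intros H eps He. destruct (H eps He) as [d [Hd Hx]]. exists d. split; [lra|].
    intros x [Hx0 Hxd]. apply Hx. split; auto. rewrite Rminus_0_r, Rabs_right; lra.
Qed.

Lemma lim0_mult f g L M : lim0 f L -> lim0 g M -> lim0 (fun x => f x * g x) (L * M).
Proof. rewrite !lim0_l1. apply limit_mul. Qed.

Lemma lim0_inv f L : lim0 f L -> L <> 0 -> lim0 (fun x => / f x) (/ L).
Proof. rewrite !lim0_l1. apply limit_inv. Qed.

Lemma lim0_const c : lim0 (fun _ => c) c.
Proof. intros eps He; exists 1; split; [lra|]. intros; rewrite Rminus_diag, Rabs_R0; auto. Qed.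

Lemma lim0_ext f g L del0 : 0 < del0 -> (forall x, 0 < x < del0 -> f x = g x) -> lim0 g L -> lim0 f L.
Proof.
  intros Hd E H eps He. destruct (H eps He) as [d [Hd' Hx]]. exists (Rmin d del0). split; [apply Rmin_pos; lra|].
  intros x [Hx0 Hxd]. rewrite E; [apply Hx|]; split; auto.
  - eapply Rlt_le_trans; [exact Hxd|apply Rmin_l].
  - eapply Rlt_le_trans; [exact Hxd|apply Rmin_r].
Qed.

Lemma lim0_scale f L mu : 0 < mu -> lim0 f L -> lim0 (fun x => f (mu * x)) L.
Proof.
  intros Hm H eps He. destruct (H eps He) as [d [Hd Hx]]. exists (d / mu). split; [apply Rdiv_lt_0_compat; lra|].
  intros x [Hx0 Hxd]. apply Hx. split; [nra|].
  apply Rmult_lt_compat_l with (r := mu) in Hxd; auto. replace (mu * (d / mu)) with d in Hxd by (field; lra). lra.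
Qed.

Lemma lim0_comp f L (X : R -> R) : lim0 f L -> (forall y, 0 < y < 1 -> 0 < X y) ->
  (forall e, 0 < e -> exists del, 0 < del /\ forall y, 0 < y < del -> X y < e) ->
  lim0 (fun y => f (X y)) L.
Proof.
  intros Hf Hpos HX eps He. destruct (Hf eps He) as [d [Hd Hx]]. destruct (HX d Hd) as [d' [Hd' Hy]].
  exists (Rmin d' 1). split; [apply Rmin_pos; lra|]. intros y [Hy0 Hyd].
  assert (y < d') by (eapply Rlt_le_trans; [exact Hyd|apply Rmin_l]).
  assert (y < 1) by (eapply Rlt_le_trans; [exact Hyd|apply Rmin_r]).
  apply Hx. split; [apply Hpos; lra|apply Hy; lra].
Qed.

Definition kf (h : R -> R) (x : R) : R := 1 - x + h x.
Definition psi (h : R -> R) (x : R) : R := h x / kf h x.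

Lemma h_pos a l1 h d x : AH a l1 h d -> 0 < x <= 1 -> 0 < h x.
Proof. intros. rewrite (h_eq h x) by lra. apply Rmult_lt_0_compat; [lra|]. apply (g_pos a l1 h d); auto. Qed.

Lemma kf_pos a l1 h d x : AH a l1 h d -> 0 < x <= 1 -> 0 < kf h x.
Proof. intros. pose proof (h_pos a l1 h d x H H0). unfold kf; lra. Qed.

Lemma h_incr a l1 h d x y : AH a l1 h d -> 0 < x <= y -> y <= 1 -> h x <= h y.
Proof.
  intros HA Hx Hy. rewrite (h_eq h x), (h_eq h y) by lra.
  pose proof (g_incr a l1 h d x y HA Hx Hy). pose proof (g_pos a l1 h d x HA ltac:(lra)). nra.
Qed.

Lemma psi_strict a l1 h d x y : AH a l1 h d -> 0 < x < y -> y <= 1 -> psi h x < psi h y.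
Proof.
  intros HA Hx Hy. unfold psi.
  pose proof (h_pos a l1 h d x HA ltac:(lra)). pose proof (h_pos a l1 h d y HA ltac:(lra)).
  pose proof (h_incr a l1 h d x y HA ltac:(lra) Hy).
  pose proof (kf_pos a l1 h d x HA ltac:(lra)). pose proof (kf_pos a l1 h d y HA ltac:(lra)).
  unfold kf in *. apply Rmult_lt_reg_r with ((1 - x + h x) * (1 - y + h y)); [nra|].
  replace (h x / (1 - x + h x) * ((1 - x + h x) * (1 - y + h y))) with (h x * (1 - y + h y)) by (field; lra).
  replace (h y / (1 - y + h y) * ((1 - x + h x) * (1 - y + h y))) with (h y * (1 - x + h x)) by (field; lra).
  nra.
Qed.

Lemma psi_le a l1 h d x y : AH a l1 h d -> 0 < x <= y -> y <= 1 -> psi h x <= psi h y.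
Proof. intros HA Hx Hy. destruct (Req_dec x y) as [->|]; [lra|]. left; apply (psi_strict a l1 h d); auto; lra. Qed.

Lemma kf_lim a l1 h d : AH a l1 h d -> lim0 (kf h) 1.
Proof.
  intros HA eps He. destruct (g_to0 a l1 h d HA 1 ltac:(lra)) as [d0 [Hd0 Hg]].
  exists (Rmin d0 (Rmin 1 (eps / 2))). split; [apply Rmin_pos; [lra|apply Rmin_pos; lra]|].
  intros x [Hx0 Hxd].
  assert (x < d0) by (eapply Rlt_le_trans; [exact Hxd|apply Rmin_l]).
  assert (x < 1) by (eapply Rlt_le_trans; [exact Hxd|eapply Rle_trans; [apply Rmin_r|apply Rmin_l]]).
  assert (x < eps / 2) by (eapply Rlt_le_trans; [exact Hxd|eapply Rle_trans; [apply Rmin_r|apply Rmin_r]]).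
  specialize (Hg x (conj Hx0 H)). pose proof (g_pos a l1 h d x HA ltac:(lra)).
  unfold kf. rewrite (h_eq h x) by lra.
  replace (1 - x + x * gf h x - 1) with (x * (gf h x - 1)) by ring.
  rewrite Rabs_mult, Rabs_right by lra. rewrite Rabs_left1 by lra. nra.
Qed.

Lemma psi_rv a l1 h d mu : AH a l1 h d -> 0 < mu ->
  lim0 (fun x => psi h (mu * x) / psi h x) (Rpower mu (a + 1)).
Proof.
  intros HA Hm.
  apply lim0_ext with (g := fun x => (mu * (gf h (mu * x) / gf h x)) * (kf h x * / kf h (mu * x))) (del0 := Rmin 1 (/ mu)).
  - apply Rmin_pos; [lra|apply Rinv_0_lt_compat; lra].
  - intros x [Hx0 Hxd].
    assert (x < 1) by (eapply Rlt_le_trans; [exact Hxd|apply Rmin_l]).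
    assert (x < / mu) by (eapply Rlt_le_trans; [exact Hxd|apply Rmin_r]).
    assert (mu * x < 1) by (apply Rmult_lt_compat_l with (r := mu) in H0; auto; rewrite Rinv_r in H0; lra).
    assert (0 < mu * x) by nra.
    pose proof (kf_pos a l1 h d x HA ltac:(lra)). pose proof (kf_pos a l1 h d (mu * x) HA ltac:(lra)).
    pose proof (g_pos a l1 h d x HA ltac:(lra)). pose proof (g_pos a l1 h d (mu * x) HA ltac:(lra)).
    unfold psi. rewrite (h_eq h x), (h_eq h (mu * x)) by lra. field. repeat split; lra.
  - rewrite Rpow_S by lra. replace (mu * Rpower mu a) with ((mu * Rpower mu a) * (1 * / 1)) by field.
    apply lim0_mult.
    + apply lim0_mult; [apply lim0_const|]. intros eps He.
      destruct (g_rv a l1 h d HA mu Hm eps He) as [del [Hdel H]]. exists del; auto.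
    + apply lim0_mult; [apply (kf_lim a l1 h d HA)|]. apply lim0_inv; [|lra].
      apply lim0_scale; auto. apply (kf_lim a l1 h d HA).
Qed.

Lemma lim0_comp' f L (X : R -> R) del0 : lim0 f L -> 0 < del0 -> (forall y, 0 < y < del0 -> 0 < X y) ->
  (forall e, 0 < e -> exists del, 0 < del /\ forall y, 0 < y < del -> X y < e) ->
  lim0 (fun y => f (X y)) L.
Proof.
  intros Hf Hd0 Hpos HX eps He. destruct (Hf eps He) as [d [Hd Hx]]. destruct (HX d Hd) as [d' [Hd' Hy]].
  exists (Rmin d' del0). split; [apply Rmin_pos; lra|]. intros y [Hy0 Hyd].
  assert (y < d') by (eapply Rlt_le_trans; [exact Hyd|apply Rmin_l]).
  assert (y < del0) by (eapply Rlt_le_trans; [exact Hyd|apply Rmin_r]).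
  apply Hx. split; [apply Hpos; lra|apply Hy; lra].
Qed.

Definition XF (h : R -> R) (xf : R -> R) : Prop :=
  forall y, 0 < y < 1 -> 0 < xf y <= 1 /\ psi h (xf y) = y.

Lemma xf_to0 a l1 h d xf : AH a l1 h d -> XF h xf ->
  forall e, 0 < e -> exists del, 0 < del /\ forall y, 0 < y < del -> xf y < e.
Proof.
  intros HA HX e He. set (e' := Rmin e 1). assert (He' : 0 < e' <= 1) by (split; [apply Rmin_pos; lra|apply Rmin_r]).
  assert (Hp : 0 < psi h e').
  { unfold psi. apply Rdiv_lt_0_compat; [apply (h_pos a l1 h d)|apply (kf_pos a l1 h d)]; auto. }
  exists (Rmin (psi h e') 1). split; [apply Rmin_pos; lra|]. intros y [Hy0 Hyd].
  assert (y < psi h e') by (eapply Rlt_le_trans; [exact Hyd|apply Rmin_l]).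
  assert (y < 1) by (eapply Rlt_le_trans; [exact Hyd|apply Rmin_r]).
  destruct (HX y (conj Hy0 H0)) as [Hx Hpsi].
  destruct (Rlt_le_dec (xf y) e') as [|Hge].
  - assert (e' <= e) by apply Rmin_l. lra.
  - pose proof (psi_le a l1 h d e' (xf y) HA ltac:(lra) ltac:(lra)). lra.
Qed.

Lemma xf_inv a l1 h d xf : AH a l1 h d -> XF h xf -> forall lam, 0 < lam ->
  forall eps, 0 < eps -> exists del, 0 < del /\ forall y, 0 < y < del ->
    Rabs (xf (lam * y) / xf y - Rpower lam (/ (a + 1))) < eps.
Proof.
  intros HA HX lam Hl eps He. pose proof HA as (Ha & _).
  set (A := a + 1). set (c := Rpower lam (/ A)).
  assert (Hc : 0 < c) by apply Rpow_pos, Hl.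
  assert (HcA : Rpower c A = lam).
  { unfold c. rewrite Rpower_mult. replace (/ A * A) with 1 by (unfold A; field; lra). apply Rpower_1; auto. }
  set (e := Rmin (eps / 2) (c / 2)).
  assert (He1 : 0 < e <= c / 2) by (split; [apply Rmin_pos; lra|apply Rmin_r]).
  assert (He2 : e <= eps / 2) by apply Rmin_l.
  set (mp := c + e). set (mm := c - e).
  assert (Hmp0 : 0 < mp) by (unfold mp; lra). assert (Hmm0 : 0 < mm) by (unfold mm; lra).
  assert (Hmmp : mm < mp) by (unfold mm, mp; lra).
  assert (Hmp : lam < Rpower mp A) by (rewrite <- HcA; apply Rpow_strict; unfold A, mp; lra).
  assert (Hmm : Rpower mm A < lam) by (rewrite <- HcA; apply Rpow_strict; unfold A, mm; lra).
  unfold A in Hmp, Hmm.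
  destruct (psi_rv a l1 h d mp HA ltac:(unfold mp; lra) (Rpower mp (a + 1) - lam) ltac:(lra)) as [d1 [Hd1 P1]].
  destruct (psi_rv a l1 h d mm HA ltac:(unfold mm; lra) (lam - Rpower mm (a + 1)) ltac:(lra)) as [d2 [Hd2 P2]].
  set (dx := Rmin (Rmin d1 d2) (Rmin (/ mp) 1)).
  assert (Hdx : 0 < dx).
  { apply Rmin_pos; apply Rmin_pos; auto. apply Rinv_0_lt_compat; unfold mp; lra. lra. }
  destruct (xf_to0 a l1 h d xf HA HX dx Hdx) as [d3 [Hd3 X3]].
  exists (Rmin d3 (Rmin (/ lam) 1)). split.
  { apply Rmin_pos; auto. apply Rmin_pos; [apply Rinv_0_lt_compat; auto|lra]. }
  intros y [Hy0 Hyd].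
  assert (y < d3) by (eapply Rlt_le_trans; [exact Hyd|apply Rmin_l]).
  assert (y < / lam) by (eapply Rlt_le_trans; [exact Hyd|eapply Rle_trans; [apply Rmin_r|apply Rmin_l]]).
  assert (y < 1) by (eapply Rlt_le_trans; [exact Hyd|eapply Rle_trans; [apply Rmin_r|apply Rmin_r]]).
  assert (Hly : lam * y < 1) by (apply Rmult_lt_compat_l with (r := lam) in H0; auto; rewrite Rinv_r in H0; lra).
  destruct (HX y (conj Hy0 H1)) as [Hx Hpx]. destruct (HX (lam * y) (conj (Rmult_lt_0_compat _ _ Hl Hy0) Hly)) as [Hx' Hpx'].
  set (x := xf y) in *. set (x' := xf (lam * y)) in *.
  destruct Hx as [Hxp Hxle]. destruct Hx' as [Hxp' Hxle'].
  specialize (X3 y (conj Hy0 H)). fold x in X3.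
  assert (x < d1) by (eapply Rlt_le_trans; [exact X3|unfold dx; eapply Rle_trans; [apply Rmin_l|apply Rmin_l]]).
  assert (x < d2) by (eapply Rlt_le_trans; [exact X3|unfold dx; eapply Rle_trans; [apply Rmin_l|apply Rmin_r]]).
  assert (x < / mp) by (eapply Rlt_le_trans; [exact X3|unfold dx; eapply Rle_trans; [apply Rmin_r|apply Rmin_l]]).
  assert (Hmpx : mp * x < 1) by (apply Rmult_lt_compat_l with (r := mp) in H4; [|unfold mp; lra]; rewrite Rinv_r in H4; unfold mp in *; lra).
  specialize (P1 x (conj Hxp H2)). specialize (P2 x (conj Hxp H3)).
  apply Rabs_def2 in P1. apply Rabs_def2 in P2. destruct P1 as [_ P1]. destruct P2 as [P2 _].
  assert (Hpsx : psi h x = y) by auto.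
  assert (Q1 : lam * psi h x < psi h (mp * x)).
  { assert (H5 : psi h (mp * x) / psi h x > lam) by lra.
    apply Rmult_lt_compat_r with (r := psi h x) in H5; [|lra]. unfold Rdiv in H5. rewrite Rmult_assoc, Rinv_l in H5; lra. }
  assert (Q2 : psi h (mm * x) < lam * psi h x).
  { assert (H5 : psi h (mm * x) / psi h x < lam) by lra.
    apply Rmult_lt_compat_r with (r := psi h x) in H5; [|lra]. unfold Rdiv in H5. rewrite Rmult_assoc, Rinv_l in H5; lra. }
  rewrite Hpsx in Q1, Q2.
  assert (Up : x' < mp * x).
  { destruct (Rlt_le_dec x' (mp * x)) as [|Hge]; auto.
    pose proof (psi_le a l1 h d (mp * x) x' HA (conj (Rmult_lt_0_compat _ _ Hmp0 Hxp) Hge) Hxle'). lra. }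
  assert (Lo : mm * x < x').
  { destruct (Rlt_le_dec (mm * x) x') as [|Hge]; auto.
    assert (mm * x <= mp * x) by (apply Rmult_le_compat_r; lra).
    pose proof (psi_le a l1 h d x' (mm * x) HA (conj Hxp' Hge) ltac:(lra)). lra. }
  assert (x' / x < mp) by (apply Rmult_lt_reg_r with x; [lra|]; unfold Rdiv; rewrite Rmult_assoc, Rinv_l; lra).
  assert (mm < x' / x) by (apply Rmult_lt_reg_r with x; [lra|]; unfold Rdiv; rewrite Rmult_assoc, Rinv_l; lra).
  apply Rabs_def1; unfold mp, mm in *; lra.
Qed.

Lemma dg_lim0 a l1 h d : AH a l1 h d -> lim0 (fun x => d x / gf h x) (a + 1).
Proof. intros HA eps He. apply (dg_limit a l1 h d HA eps He). Qed.

Lemma xf_scale_to0 a l1 h d xf lam : AH a l1 h d -> XF h xf -> 0 < lam ->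
  forall e, 0 < e -> exists del, 0 < del /\ forall y, 0 < y < del -> xf (lam * y) < e.
Proof.
  intros HA HX Hl e He. destruct (xf_to0 a l1 h d xf HA HX e He) as [d0 [Hd0 H]].
  exists (d0 / lam). split; [apply Rdiv_lt_0_compat; auto|]. intros y [Hy0 Hyd]. apply H. split; [nra|].
  apply Rmult_lt_compat_l with (r := lam) in Hyd; auto. replace (lam * (d0 / lam)) with d0 in Hyd by (field; lra). auto.
Qed.

Lemma d_ratio a l1 h d xf : AH a l1 h d -> XF h xf -> forall lam, 0 < lam ->
  lim0 (fun y => d (xf (lam * y)) / d (xf y)) (Rpower (Rpower lam (/ (a + 1))) a).
Proof.
  intros HA HX lam Hl. pose proof HA as (Ha & _).
  set (c := Rpower lam (/ (a + 1))). assert (Hc : 0 < c) by apply Rpow_pos, Hl.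
  assert (Hpos : forall y, 0 < y < Rmin 1 (/ lam) -> 0 < xf y <= 1 /\ 0 < xf (lam * y) <= 1).
  { intros y [Hy0 Hyd]. assert (y < 1) by (eapply Rlt_le_trans; [exact Hyd|apply Rmin_l]).
    assert (y < / lam) by (eapply Rlt_le_trans; [exact Hyd|apply Rmin_r]).
    assert (lam * y < 1) by (apply Rmult_lt_compat_l with (r := lam) in H0; auto; rewrite Rinv_r in H0; lra).
    split; apply HX; split; try lra. apply Rmult_lt_0_compat; lra. }
  apply lim0_ext with (del0 := Rmin 1 (/ lam))
    (g := fun y => (d (xf (lam * y)) / gf h (xf (lam * y))) * (gf h (xf (lam * y)) / gf h (xf y))
                   * / (d (xf y) / gf h (xf y))).
  { apply Rmin_pos; [lra|apply Rinv_0_lt_compat; auto]. }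
  { intros y Hy. destruct (Hpos y Hy) as [[A1 A2] [B1 B2]].
    pose proof (g_pos a l1 h d _ HA (conj A1 A2)). pose proof (g_pos a l1 h d _ HA (conj B1 B2)).
    pose proof (d_pos a l1 h d _ HA (conj A1 A2)). pose proof (d_pos a l1 h d _ HA (conj B1 B2)).
    field. repeat split; lra. }
  replace (Rpower c a) with ((a + 1) * Rpower c a * / (a + 1)) by (field; lra).
  apply lim0_mult; [apply lim0_mult|apply lim0_inv; [|lra]].
  - apply (lim0_comp' (fun x => d x / gf h x) (a + 1) (fun y => xf (lam * y)) (/ lam)); [apply (dg_lim0 a l1 h d HA)|apply Rinv_0_lt_compat; auto| |].
    + intros y [Hy0 Hyd]. apply HX. split; [apply Rmult_lt_0_compat; auto|].
      apply Rmult_lt_compat_l with (r := lam) in Hyd; auto. rewrite Rinv_r in Hyd; lra.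
    + apply (xf_scale_to0 a l1 h d xf lam HA HX Hl).
  - intros eps He. destruct (g_unif a l1 h d HA c Hc eps He) as [dl [et [Hdl [Het U]]]].
    destruct (xf_inv a l1 h d xf HA HX lam Hl et Het) as [d1 [Hd1 I1]].
    destruct (xf_to0 a l1 h d xf HA HX dl Hdl) as [d2 [Hd2 I2]].
    exists (Rmin (Rmin d1 d2) (Rmin 1 (/ lam))). split.
    { apply Rmin_pos; [apply Rmin_pos; auto|apply Rmin_pos; [lra|apply Rinv_0_lt_compat; auto]]. }
    intros y [Hy0 Hyd].
    assert (y < d1) by (eapply Rlt_le_trans; [exact Hyd|eapply Rle_trans; [apply Rmin_l|apply Rmin_l]]).
    assert (y < d2) by (eapply Rlt_le_trans; [exact Hyd|eapply Rle_trans; [apply Rmin_l|apply Rmin_r]]).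
    assert (Hy' : 0 < y < Rmin 1 (/ lam)) by (split; auto; eapply Rlt_le_trans; [exact Hyd|apply Rmin_r]).
    destruct (Hpos y Hy') as [[A1 A2] [B1 B2]].
    specialize (I1 y (conj Hy0 H)). specialize (I2 y (conj Hy0 H0)).
    specialize (U (xf y) (xf (lam * y) / xf y) (conj A1 I2) I1).
    replace (xf (lam * y) / xf y * xf y) with (xf (lam * y)) in U by (field; lra). exact U.
  - apply (lim0_comp' (fun x => d x / gf h x) (a + 1) xf 1); [apply (dg_lim0 a l1 h d HA)|lra| |].
    + intros y Hy. apply HX; auto.
    + apply (xf_to0 a l1 h d xf HA HX).
Qed.

Lemma l2_sv a l1 h d xf (L2 : R -> R) : AH a l1 h d -> XF h xf ->
  (forall y, 0 < y < 1 -> L2 y = d (xf y) / Rpower y (a / (a + 1))) -> slowly_varying_0 L2.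
Proof.
  intros HA HX HL lam Hl. pose proof HA as (Ha & _).
  set (gam := a / (a + 1)).
  assert (Hca : Rpower (Rpower lam (/ (a + 1))) a = Rpower lam gam).
  { rewrite Rpower_mult. unfold gam. f_equal. field. lra. }
  assert (Hpl := Rpow_pos lam gam Hl).
  change (lim0 (fun x => L2 (lam * x) / L2 x) 1).
  apply lim0_ext with (del0 := Rmin 1 (/ lam)) (g := fun y => d (xf (lam * y)) / d (xf y) * / Rpower lam gam).
  { apply Rmin_pos; [lra|apply Rinv_0_lt_compat; auto]. }
  { intros y [Hy0 Hyd]. assert (y < 1) by (eapply Rlt_le_trans; [exact Hyd|apply Rmin_l]).
    assert (y < / lam) by (eapply Rlt_le_trans; [exact Hyd|apply Rmin_r]).
    assert (lam * y < 1) by (apply Rmult_lt_compat_l with (r := lam) in H0; auto; rewrite Rinv_r in H0; lra).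
    assert (0 < lam * y) by (apply Rmult_lt_0_compat; auto).
    rewrite !HL by lra. fold gam.
    destruct (HX y ltac:(lra)) as [[A1 A2] _]. destruct (HX (lam * y) ltac:(lra)) as [[B1 B2] _].
    pose proof (d_pos a l1 h d _ HA (conj A1 A2)). pose proof (d_pos a l1 h d _ HA (conj B1 B2)).
    rewrite Rpow_mul by lra. pose proof (Rpow_pos y gam Hy0). field. repeat split; lra. }
  replace 1 with (Rpower lam gam * / Rpower lam gam) by (field; lra).
  apply lim0_mult; [|apply lim0_const]. rewrite <- Hca. apply (d_ratio a l1 h d xf HA HX lam Hl).
Qed.

Lemma cv_ext u v L N : Un_cv u L -> (forall n, (N <= n)%nat -> u n = v n) -> Un_cv v L.
Proof.
  intros H E eps He. destruct (H eps He) as [M HM]. exists (max M N). intros n Hn.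
  rewrite <- E by lia. apply HM; lia.
Qed.

Lemma cv_const c : Un_cv (fun _ => c) c.
Proof. intros eps He; exists O; intros; unfold Rdist; rewrite Rminus_diag, Rabs_R0; auto. Qed.

Lemma cv_squeeze l u v L : Un_cv l L -> Un_cv u L -> (forall n, l n <= v n <= u n) -> Un_cv v L.
Proof.
  intros Hl Hu Hv eps He. destruct (Hl eps He) as [N1 H1]. destruct (Hu eps He) as [N2 H2].
  exists (max N1 N2). intros n Hn. specialize (H1 n ltac:(lia)). specialize (H2 n ltac:(lia)).
  specialize (Hv n). unfold Rdist in *. apply Rabs_def2 in H1, H2. apply Rabs_def1; lra.
Qed.

Lemma cv_inv u L : Un_cv u L -> L <> 0 -> Un_cv (fun n => / u n) (/ L).
Proof.
  intros H HL eps He.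
  assert (HaL : 0 < Rabs L) by (apply Rabs_pos_lt; auto).
  destruct (H (Rabs L / 2)) as [N1 H1]; [lra|].
  assert (Hp2 : 0 < eps * (Rabs L * Rabs L) / 2) by (unfold Rdiv; apply Rmult_lt_0_compat; [apply Rmult_lt_0_compat; [lra|apply Rmult_lt_0_compat; lra]|lra]).
  destruct (H (eps * (Rabs L * Rabs L) / 2)) as [N2 H2]; [lra|].
  exists (max N1 N2). intros n Hn. specialize (H1 n ltac:(lia)). specialize (H2 n ltac:(lia)).
  unfold Rdist in *.
  assert (Hu : Rabs L / 2 < Rabs (u n)).
  { pose proof (Rabs_triang_inv L (u n)). rewrite Rabs_minus_sym in H1. lra. }
  assert (Hun : u n <> 0) by (intros E; rewrite E, Rabs_R0 in Hu; lra).
  replace (/ u n - / L) with ((L - u n) / (u n * L)) by (field; auto).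
  unfold Rdiv. rewrite Rabs_mult, Rabs_inv, Rabs_mult, Rabs_minus_sym.
  apply Rmult_lt_reg_r with (Rabs (u n) * Rabs L); [nra|].
  rewrite Rmult_assoc, Rinv_l by nra.
  assert (eps * (Rabs L / 2 * Rabs L) < eps * (Rabs (u n) * Rabs L)).
  { apply Rmult_lt_compat_l; auto; apply Rmult_lt_compat_r; auto. }
  replace (eps * (Rabs L * Rabs L) / 2) with (eps * (Rabs L / 2 * Rabs L)) in H2 by field. lra.
Qed.

Lemma cv_shift u L : Un_cv (fun n => u (S n)) L -> Un_cv u L.
Proof.
  intros H eps He. destruct (H eps He) as [N HN]. exists (S N). intros n Hn.
  destruct n as [|n]; [lia|]. apply HN; lia.
Qed.

Lemma cv_shift' u L : Un_cv u L -> Un_cv (fun n => u (S n)) L.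
Proof. intros H eps He. destruct (H eps He) as [N HN]. exists N. intros n Hn. apply HN; lia. Qed.

Lemma cv_inv_INR : Un_cv (fun n => / INR n) 0.
Proof.
  intros eps He. destruct (archimed_cor1 eps He) as [N [HN HN0]]. exists N. intros n Hn.
  unfold Rdist. rewrite Rminus_0_r.
  assert (0 < INR N) by (apply lt_0_INR; auto). assert (INR N <= INR n) by (apply le_INR; auto).
  rewrite Rabs_right by (apply Rle_ge; left; apply Rinv_0_lt_compat; lra).
  eapply Rle_lt_trans; [|exact HN]. apply Rinv_le_contravar; auto.
Qed.

Lemma cv_comp0 (phi : R -> R) L (s : nat -> R) : lim0 phi L -> (forall n, 0 < s n) ->
  (forall e, 0 < e -> exists N, forall n, (N <= n)%nat -> s n < e) -> Un_cv (fun n => phi (s n)) L.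
Proof.
  intros Hp Hs Hs0 eps He. destruct (Hp eps He) as [d [Hd H]]. destruct (Hs0 d Hd) as [N HN].
  exists N. intros n Hn. unfold Rdist. apply H. split; auto.
Qed.


Definition QS (h : R -> R) (q : nat -> R) : Prop := q 0%nat = 1 /\ forall n, q (S n) = q n - h (q n).

Lemma q_range a l1 h d q : AH a l1 h d -> (forall x, 0 < x <= 1 -> h x < x) -> QS h q ->
  forall n, 0 < q n <= 1 /\ q (S n) <= q n.
Proof.
  intros HA H5 [Q0 QS] n. induction n as [|n [IH1 IH2]].
  - rewrite QS, Q0. pose proof (H5 1 ltac:(lra)). pose proof (h_pos a l1 h d 1 HA ltac:(lra)). lra.
  - assert (0 < q (S n) <= 1).
    { rewrite QS. pose proof (H5 (q n) IH1). pose proof (h_pos a l1 h d (q n) HA IH1). lra. }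
    split; auto. rewrite (QS (S n)). pose proof (h_pos a l1 h d (q (S n)) HA H). lra.
Qed.

Lemma q_to0 a l1 h d q : AH a l1 h d -> (forall x, 0 < x <= 1 -> h x < x) -> QS h q ->
  forall e, 0 < e -> exists N, forall n, (N <= n)%nat -> q n < e.
Proof.
  intros HA H5 HQ e He. pose proof (q_range a l1 h d q HA H5 HQ) as R.
  assert (Hdec : forall m n, (m <= n)%nat -> q n <= q m).
  { intros m n Hmn. induction Hmn; [lra|]. pose proof (R m0). lra. }
  set (e' := Rmin e 1). assert (He' : 0 < e' <= 1) by (split; [apply Rmin_pos; lra|apply Rmin_r]).
  assert (He'e : e' <= e) by apply Rmin_l.
  destruct (Classical_Prop.classic (exists N, q N < e')) as [[N HN]|Hn].
  - exists N. intros n Hn. pose proof (Hdec N n Hn). lra.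
  - exfalso. assert (Hall : forall n, e' <= q n).
    { intros n. destruct (Rle_lt_dec e' (q n)); auto. exfalso; apply Hn; eauto. }
    set (c := e' * gf h e').
    assert (Hc : 0 < c) by (unfold c; apply Rmult_lt_0_compat; [lra|apply (g_pos a l1 h d e' HA He')]).
    assert (Hstep : forall n, c <= h (q n)).
    { intros n. rewrite (h_eq h (q n)) by (pose proof (R n); lra). unfold c.
      pose proof (R n). pose proof (Hall n).
      pose proof (g_incr a l1 h d e' (q n) HA ltac:(lra) ltac:(lra)).
      pose proof (g_pos a l1 h d e' HA He'). apply Rmult_le_compat; lra. }
    assert (Hlin : forall n, q n <= 1 - INR n * c).
    { destruct HQ as [Q0 QS]. induction n; [rewrite Q0; simpl; lra|].
      rewrite QS, S_INR. specialize (Hstep n). lra. }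
    destruct (archimed_cor1 c Hc) as [N [HN HN0]].
    specialize (Hlin N). specialize (Hall N).
    assert (0 < INR N) by (apply lt_0_INR; auto).
    assert (1 < INR N * c).
    { apply Rmult_lt_compat_l with (r := INR N) in HN; auto. rewrite Rinv_r in HN; lra. }
    lra.
Qed.

Lemma q_main a l1 h d q : AH a l1 h d -> (forall x, 0 < x <= 1 -> h x < x) -> QS h q ->
  Un_cv (fun n => d (q n) * INR (S n)) ((a + 1) / a).
Proof.
  intros HA H5 HQ. pose proof HA as (Ha & Hsv & H0 & Hh & H2 & H3 & H4).
  pose proof (q_range a l1 h d q HA H5 HQ) as R.
  pose proof (q_to0 a l1 h d q HA H5 HQ) as Q0.
  destruct HQ as [Qz QS].
  set (t := fun n => gf h (q n)).
  assert (Ht : forall n, 0 < t n) by (intros; apply (g_pos a l1 h d _ HA); apply R).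
  assert (Hdp : forall n, 0 < d (q n)) by (intros; apply (d_pos a l1 h d _ HA); apply R).
  assert (Hqx : forall n, q (S n) = (1 - t n) * q n).
  { intros n. rewrite QS, (h_eq h (q n)) by (apply R). unfold t; ring. }
  assert (DG : Un_cv (fun n => d (q n) / t n) (a + 1)).
  { apply (cv_comp0 (fun x => d x / gf h x)); [apply (dg_lim0 a l1 h d HA)|intros; apply R|auto]. }
  assert (T0 : Un_cv t 0).
  { intros eps He. destruct (g_to0 a l1 h d HA eps He) as [dl [Hdl G]]. destruct (Q0 dl Hdl) as [N HN].
    exists N. intros n Hn. unfold Rdist. rewrite Rminus_0_r, Rabs_right by (left; apply Ht).
    apply G. split; [apply R|auto]. }
  assert (RAT : Un_cv (fun n => t (S n) / t n) 1).
  { intros eps He. destruct (g_unif a l1 h d HA 1 ltac:(lra) eps He) as [dl [et [Hdl [Het U]]]].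
    destruct (Q0 dl Hdl) as [N1 HN1]. destruct (T0 et Het) as [N2 HN2].
    exists (max N1 N2). intros n Hn. specialize (HN1 n ltac:(lia)). specialize (HN2 n ltac:(lia)).
    unfold Rdist in *. rewrite Rminus_0_r in HN2. rewrite Rpow_1 in U.
    unfold t at 1. rewrite Hqx. apply U; [split; [apply R|auto]|].
    replace (1 - t n - 1) with (- t n) by ring. rewrite Rabs_Ropp; auto. }
  assert (STEP : forall n, d (q (S n)) / t (S n) - 1 <= / t (S n) - / t n <=
                           (d (q n) / t n) * / (t (S n) / t n) - 1).
  { intros n. destruct (R n) as [[Rx0 Rx1] Ryx]. destruct (R (S n)) as [[Ry0 Ry1] _].
    assert (Ex : h (q n) = q n * t n) by (apply h_eq; lra).
    assert (Ey : h (q (S n)) = q (S n) * t (S n)) by (apply h_eq; lra).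
    assert (Exy : q n - q (S n) = q n * t n) by (rewrite QS, Ex; ring).
    pose proof (Ht n) as Htx. pose proof (Ht (S n)) as Hty.
    set (x := q n) in *. set (y := q (S n)) in *. set (tx := t n) in *. set (ty := t (S n)) in *.
    specialize (H2 y x ltac:(lra) Rx1 Rx0). specialize (H3 y x ltac:(lra) Rx1).
    rewrite Exy, Ex, Ey in H2, H3.
    split.
    - apply Rmult_le_reg_r with (tx * ty); [nra|].
      replace ((d y / ty - 1) * (tx * ty)) with (tx * d y - tx * ty) by (field; lra).
      replace ((/ ty - / tx) * (tx * ty)) with (tx - ty) by (field; lra).
      assert (x * tx * d y <= x * (tx - ty) + x * tx * ty) by nra.
      assert (tx * d y <= (tx - ty) + tx * ty); [|lra].
      apply Rmult_le_reg_l with x; [lra|]. nra.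
    - apply Rmult_le_reg_r with (tx * ty); [nra|].
      replace (d x / tx * / (ty / tx) - 1) with ((d x - ty) / ty) by (field; lra).
      replace ((d x - ty) / ty * (tx * ty)) with (tx * d x - tx * ty) by (field; lra).
      replace ((/ ty - / tx) * (tx * ty)) with (tx - ty) by (field; lra).
      assert (x * (tx - ty) + x * tx * ty <= x * tx * d x) by nra.
      assert ((tx - ty) + tx * ty <= tx * d x); [|lra].
      apply Rmult_le_reg_l with x; [lra|]. nra. }
  assert (DIFF : Un_cv (fun n => / t (S n) - / t n) a).
  { apply cv_squeeze with (l := fun n => d (q (S n)) / t (S n) - 1)
                          (u := fun n => (d (q n) / t n) * / (t (S n) / t n) - 1); [| |exact STEP].
    - replace a with ((a + 1) - 1) by ring. apply CV_minus; [|apply cv_const].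
      apply (cv_shift' (fun n => d (q n) / t n)). auto.
    - replace a with ((a + 1) * / 1 - 1) by field. apply CV_minus; [|apply cv_const].
      apply CV_mult; [exact DG|apply cv_inv; [exact RAT|lra]]. }
  assert (TEL : forall m, sum_f_R0 (fun k => / t (S k) - / t k) m = / t (S m) - / t 0%nat).
  { induction m; simpl; [ring|]. rewrite IHm; ring. }
  pose proof (Cesaro_1 _ _ DIFF) as CES.
  assert (C2 : Un_cv (fun n => / t n / INR n) a).
  { assert (C3 : Un_cv (fun n => sum_f_R0 (fun k => / t (S k) - / t k) (pred n) / INR n + / t 0%nat * / INR n) (a + / t 0%nat * 0)).
    { apply CV_plus; auto. apply CV_mult; [apply cv_const|apply cv_inv_INR]. }
    rewrite Rmult_0_r, Rplus_0_r in C3. apply (cv_ext _ _ _ 1%nat C3).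
    intros n Hn. destruct n as [|m]; [lia|]. simpl pred. rewrite TEL.
    assert (0 < INR (S m)) by (apply lt_0_INR; lia). pose proof (Ht (S m)); pose proof (Ht 0%nat). field; repeat split; lra. }
  assert (C4 : Un_cv (fun n => INR n * t n) (/ a)).
  { apply cv_inv in C2; [|lra]. apply (cv_ext _ _ _ 1%nat C2).
    intros n Hn. assert (0 < INR n) by (apply lt_0_INR; lia). pose proof (Ht n). field; lra. }
  assert (C5 : Un_cv (fun n => INR (S n) * t n) (/ a)).
  { replace (/ a) with (/ a + 0) by ring. apply cv_ext with (u := fun n => INR n * t n + t n) (N := O).
    - apply CV_plus; auto.
    - intros n _. rewrite S_INR; ring. }
  apply cv_ext with (u := fun n => (d (q n) / t n) * (INR (S n) * t n)) (N := O).
  - unfold Rdiv at 2. apply CV_mult; auto.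
  - intros n _. pose proof (Ht n). field; lra.
Qed.

Definition ssum (u : nat -> R) : R := epsilon (inhabits 0) (fun l => infinite_sum u l).

Lemma ssum_spec u B : (forall n, 0 <= u n) -> (forall N, psum u N <= B) -> infinite_sum u (ssum u).
Proof.
  intros Hu HB. unfold ssum. apply epsilon_spec.
  destruct (completeness (fun r => exists N, r = psum u N)) as [l [H1 H2]].
  - exists B. intros r [N ->]; auto.
  - exists 0, O. reflexivity.
  - exists l. apply isum_of_sup; auto.
    + intros N; apply H1; eauto.
    + intros eps He. apply not_all_not_ex. intros Hn. assert (l <= l - eps); [|lra].
      apply H2. intros r [N ->]. specialize (Hn N). lra.
Qed.

Lemma isum_le_bound u l B : infinite_sum u l -> (forall N, psum u N <= B) -> l <= B.
Proof.
  intros H HB. destruct (Rle_lt_dec l B) as [|Hlt]; auto.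
  destruct (isum_approx u l (l - B) H ltac:(lra)) as [N HN]. specialize (HN N (le_n _)). specialize (HB N). lra.
Qed.

Lemma psum_shift u N : psum u (S N) = u O + psum (fun m => u (S m)) N.
Proof. induction N. - unfold psum; simpl; ring. - rewrite psum_S, IHN, psum_S. ring. Qed.

Lemma pow_mvt a b m : 0 <= a <= b ->
  (b - a) * INR (S m) * a ^ m <= b ^ S m - a ^ S m <= (b - a) * INR (S m) * b ^ m.
Proof.
  intros Hab. induction m.
  - simpl. lra.
  - rewrite (S_INR (S m)). cbn [pow] in *. destruct IHm as [L U].
    set (n := INR (S m)) in *. set (A := a ^ m) in *. set (B := b ^ m) in *.
    assert (HA : 0 <= A) by (apply pow_le; lra). assert (HAB : A <= B) by (apply pow_incr; lra).
    assert (Hn : 0 <= n) by apply pos_INR.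
    assert (E : b * (b * B) - a * (a * A) = b * (b * B - a * A) + a * A * (b - a)) by ring.
    rewrite E.
    assert (P1 : 0 <= (b - a) * n * A) by (apply Rmult_le_pos; [apply Rmult_le_pos|]; lra).
    assert (P2 : a * ((b - a) * n * A) <= b * ((b - a) * n * A)) by (apply Rmult_le_compat_r; lra).
    assert (P3 : b * ((b - a) * n * A) <= b * (b * B - a * A)) by (apply Rmult_le_compat_l; lra).
    assert (P4 : b * (b * B - a * A) <= b * ((b - a) * n * B)) by (apply Rmult_le_compat_l; lra).
    assert (P5 : a * A * (b - a) <= b * B * (b - a)) by (apply Rmult_le_compat_r; [lra|apply Rmult_le_compat; lra]).
    split; nra.
Qed.

Lemma pow_bound w m : 0 <= w < 1 -> INR (S m) * w ^ m <= / (1 - w).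
Proof.
  intros Hw.
  assert (H1 : INR (S m) * w ^ m <= psum (fun j => w ^ j) (S m)).
  { induction m.
    - unfold psum; simpl; lra.
    - rewrite psum_S, S_INR. assert (w ^ S m <= w ^ m) by (simpl; assert (0 <= w ^ m) by (apply pow_le; lra); nra).
      assert (0 <= w ^ S m) by (apply pow_le; lra).
      assert (INR (S m) * w ^ S m <= INR (S m) * w ^ m) by (apply Rmult_le_compat_l; [apply pos_INR|lra]). lra. }
  assert (H2 : psum (fun j => w ^ j) (S m) * (1 - w) = 1 - w ^ S m).
  { clear H1. induction m. - unfold psum; simpl; ring. - rewrite psum_S. rewrite Rmult_plus_distr_r, IHm. simpl; ring. }
  assert (0 <= w ^ S m) by (apply pow_le; lra).
  apply Rle_trans with (psum (fun j => w ^ j) (S m)); auto.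
  apply Rmult_le_reg_r with (1 - w); [lra|]. rewrite Rinv_l by lra. lra.
Qed.

Definition Dser (p : nat -> R) (w : R) : R := ssum (fun m => cc p m * w ^ m).

Lemma cc_nonneg p m : (forall n, 0 <= p n) -> 0 <= cc p m.
Proof. intros; unfold cc; apply Rmult_le_pos; auto; apply pos_INR. Qed.

Lemma Dser_spec p w : offspring_distribution p -> 0 <= w < 1 ->
  infinite_sum (fun m => cc p m * w ^ m) (Dser p w).
Proof.
  intros [Hp H1] Hw. apply ssum_spec with (B := / (1 - w)).
  - intros; apply Rmult_le_pos; [apply cc_nonneg; auto|apply pow_le; lra].
  - intros N. apply Rle_trans with (/ (1 - w) * psum (fun m => p (S m)) N).
    + rewrite <- psum_scal. apply psum_le. intros m _. unfold cc.
      pose proof (pow_bound w m Hw). specialize (Hp (S m)). nra.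
    + assert (psum (fun m => p (S m)) N <= 1).
      { apply Rle_trans with (psum p (S N)).
        - rewrite psum_shift. specialize (Hp O). lra.
        - apply isum_le; auto. }
      assert (0 < / (1 - w)) by (apply Rinv_0_lt_compat; lra). nra.
Qed.

Lemma Dser_mono p w w' : offspring_distribution p -> 0 <= w <= w' -> w' < 1 -> Dser p w <= Dser p w'.
Proof.
  intros Hod Hw Hw'. pose proof (proj1 Hod) as Hp.
  apply isum_le_bound with (u := fun m => cc p m * w ^ m); [apply Dser_spec; auto; lra|].
  intros N. apply Rle_trans with (psum (fun m => cc p m * w' ^ m) N).
  - apply psum_le. intros m _. apply Rmult_le_compat_l; [apply cc_nonneg; auto|apply pow_incr; lra].
  - apply isum_le; [|apply Dser_spec; auto; lra]. intros; apply Rmult_le_pos; [apply cc_nonneg; auto|apply pow_le; lra].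
Qed.

Lemma E1 p F a b : offspring_distribution p ->
  (forall x, 0 <= x <= 1 -> infinite_sum (fun k => p k * x ^ k) (F x)) -> 0 <= a <= b -> b <= 1 ->
  (a < 1 -> (b - a) * Dser p a <= F b - F a) /\ (b < 1 -> F b - F a <= (b - a) * Dser p b).
Proof.
  intros Hod HF Hab Hb. pose proof (proj1 Hod) as Hp.
  assert (Hd := isum_minus _ _ _ _ (HF b ltac:(lra)) (HF a ltac:(lra))). simpl in Hd.
  assert (Hdn : forall k, 0 <= p k * b ^ k - p k * a ^ k).
  { intros k. rewrite <- Rmult_minus_distr_l. apply Rmult_le_pos; auto. assert (a ^ k <= b ^ k) by (apply pow_incr; lra). lra. }
  assert (Hshift : forall N, psum (fun k => p k * b ^ k - p k * a ^ k) (S N)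
                             = psum (fun m => p (S m) * (b ^ S m - a ^ S m)) N).
  { intros N. rewrite psum_shift. simpl pow at 1 2. replace (p O * 1 - p O * 1) with 0 by ring.
    rewrite Rplus_0_l. apply psum_ext. intros; ring. }
  split.
  - intros Ha1. destruct (Req_dec a b) as [->|Hne]; [lra|].
    assert (Dser p a <= (F b - F a) / (b - a)).
    { apply isum_le_bound with (u := fun m => cc p m * a ^ m); [apply Dser_spec; auto; lra|].
      intros N. apply Rmult_le_reg_r with (b - a); [lra|]. unfold Rdiv. rewrite Rmult_assoc, Rinv_l, Rmult_1_r by lra.
      apply Rle_trans with (psum (fun k => p k * b ^ k - p k * a ^ k) (S N)); [|apply isum_le; auto].
      rewrite Hshift, Rmult_comm, <- psum_scal. apply psum_le. intros m _. unfold cc.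
      pose proof (pow_mvt a b m Hab) as [L _]. specialize (Hp (S m)). nra. }
    apply Rmult_le_reg_r with (/ (b - a)); [apply Rinv_0_lt_compat; lra|].
    replace ((b - a) * Dser p a * / (b - a)) with (Dser p a) by (field; lra). auto.
  - intros Hb1. apply isum_le_bound with (u := fun k => p k * b ^ k - p k * a ^ k); auto.
    intros [|N]; [unfold psum; simpl; apply Rmult_le_pos; [lra|]; apply Rle_trans with (psum (fun m => cc p m * b ^ m) 0); [unfold psum; simpl; lra|apply isum_le; [intros; apply Rmult_le_pos; [apply cc_nonneg; auto|apply pow_le; lra]|apply Dser_spec; auto; lra]]|].
    rewrite Hshift. apply Rle_trans with ((b - a) * psum (fun m => cc p m * b ^ m) N).
    + rewrite <- psum_scal. apply psum_le. intros m _. unfold cc.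
      pose proof (pow_mvt a b m Hab) as [_ U]. specialize (Hp (S m)). nra.
    + apply Rmult_le_compat_l; [lra|]. apply isum_le; [intros; apply Rmult_le_pos; [apply cc_nonneg; auto|apply pow_le; lra]|apply Dser_spec; auto; lra].
Qed.

Lemma d_to0 a l1 h d : AH a l1 h d -> forall eps, 0 < eps ->
  exists del, 0 < del /\ forall x, 0 < x < del -> d x < eps.
Proof.
  intros HA eps He. pose proof HA as (Ha & _).
  destruct (dg_limit a l1 h d HA 1 ltac:(lra)) as [d1 [Hd1 D1]].
  destruct (g_to0 a l1 h d HA (eps / (a + 2))) as [d2 [Hd2 D2]]; [apply Rdiv_lt_0_compat; lra|].
  exists (Rmin (Rmin d1 d2) 1). split; [apply Rmin_pos; [apply Rmin_pos|]; lra|].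
  intros x [Hx0 Hxd].
  assert (x < d1) by (eapply Rlt_le_trans; [exact Hxd|eapply Rle_trans; [apply Rmin_l|apply Rmin_l]]).
  assert (x < d2) by (eapply Rlt_le_trans; [exact Hxd|eapply Rle_trans; [apply Rmin_l|apply Rmin_r]]).
  assert (x < 1) by (eapply Rlt_le_trans; [exact Hxd|apply Rmin_r]).
  specialize (D1 x (conj Hx0 H)). specialize (D2 x (conj Hx0 H0)).
  pose proof (g_pos a l1 h d x HA ltac:(lra)) as Hg.
  apply Rabs_def2 in D1. destruct D1 as [D1 _].
  assert (d x / gf h x < a + 2) by lra.
  replace (d x) with (d x / gf h x * gf h x) by (field; lra).
  apply Rle_lt_trans with ((a + 2) * gf h x); [apply Rmult_le_compat_r; lra|].
  apply Rmult_lt_reg_l with (/ (a + 2)); [apply Rinv_0_lt_compat; lra|].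
  rewrite <- Rmult_assoc, Rinv_l, Rmult_1_l by lra. unfold Rdiv in D2. lra.
Qed.

Theorem mainTheorem5 (p : nat -> R) (beta : R) (l1 : R -> R) :
  offspring_distribution p ->
  2 < beta <= 3 ->
  slowly_varying_0 l1 ->
  (forall z : R, 0 <= z <= 1 ->
     infinite_sum (fun k => p k * z ^ k) (z + rpow (1 - z) (beta - 1) * l1 (1 - z))) ->
  forall i : nat, (1 <= i)%nat ->
    (exists l2 : R -> R, slowly_varying_0 l2 /\
       forall z : R, 0 < z < 1 ->
         A_size_gf p i z = 1 - rpow (1 - z) ((beta - 2) / (beta - 1)) * l2 (1 - z))
    /\
    Un_cv (fun n => A_survival p i n / ((beta - 1) / (beta - 2) * / INR n)) 1.
Proof.
  intros Hod Hb Hsv HF0 i Hi. pose proof (proj1 Hod) as Hp.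
  set (F := fun z => z + rpow (1 - z) (beta - 1) * l1 (1 - z)).
  assert (HF : forall x, 0 <= x <= 1 -> infinite_sum (fun k => p k * x ^ k) (F x)) by exact HF0.
  set (a := beta - 2).
  set (h := fun x => rpow x (beta - 1) * l1 x).
  set (d := fun x => 1 - Dser p (1 - x)).
  assert (HFh : forall x, F (1 - x) = 1 - x + h x).
  { intros; unfold F, h. replace (1 - (1 - x)) with x by ring. reflexivity. }
  assert (HA : AH a l1 h d).
  { split; [unfold a; lra|]. split; [exact Hsv|]. split.
    { unfold h, rpow. destruct (Rle_dec 0 0); [ring|lra]. }
    split.
    { intros x Hx. unfold h, rpow. destruct (Rle_dec x 0); [lra|].
      replace (a + 1) with (beta - 1) by (unfold a; ring). reflexivity. }
    split.
    { intros x y Hxy Hy1 Hy0. destruct (E1 p F (1 - y) (1 - x) Hod HF ltac:(lra) ltac:(lra)) as [L _].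
      specialize (L ltac:(lra)). rewrite !HFh in L. unfold d.
      replace (1 - x - (1 - y)) with (y - x) in L by ring.
      rewrite Rmult_minus_distr_l, Rmult_1_r. lra. }
    split.
    { intros x y Hxy Hy1. destruct (E1 p F (1 - y) (1 - x) Hod HF ltac:(lra) ltac:(lra)) as [_ U].
      specialize (U ltac:(lra)). rewrite !HFh in U. unfold d.
      replace (1 - x - (1 - y)) with (y - x) in U by ring.
      rewrite Rmult_minus_distr_l, Rmult_1_r. lra. }
    { intros x y Hxy Hy. unfold d. pose proof (Dser_mono p (1 - y) (1 - x) Hod ltac:(lra) ltac:(lra)). lra. } }
  pose proof HA as (Ha & _).
  split.
  -
    assert (Hxz : forall y, exists x, 0 < y < 1 -> 0 < x <= 1 /\ psi h x = y /\ A_size_gf p i (1 - y) = 1 - d x).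
    { intros y. destruct (classic (0 < y < 1)) as [Hy|Hy]; [|exists 0; tauto].
      destruct (comb_A p i (1 - y) F Hod ltac:(lra) HF) as [X [HX0 [HXe HXA]]].
      exists (1 - X). intros _.
      assert (HD := Dser_spec p X Hod ltac:(lra)).
      assert (Hx : 0 < 1 - X <= 1) by lra.
      split; [exact Hx|split].
      - pose proof (kf_pos a l1 h d (1 - X) HA Hx) as Hk.
        assert (Ek : kf h (1 - X) = F X) by (unfold kf; rewrite <- HFh; f_equal; ring).
        unfold psi. rewrite Ek in *. assert (Eh : h (1 - X) = F X - X) by (rewrite <- Ek; unfold kf; ring).
        assert (E2 : F X - X = y * F X) by (rewrite HXe at 2; ring).
        rewrite Eh, E2. field. lra.
      - rewrite (HXA _ HD). unfold d. f_equal. replace (1 - (1 - X)) with X by ring. ring. }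
    set (xf := fun y => proj1_sig (constructive_indefinite_description _ (Hxz y))).
    assert (Hxf : forall y, 0 < y < 1 -> 0 < xf y <= 1 /\ psi h (xf y) = y /\ A_size_gf p i (1 - y) = 1 - d (xf y)).
    { intros y Hy. unfold xf. destruct (constructive_indefinite_description _ (Hxz y)) as [x Hx]. simpl. auto. }
    assert (HXF : XF h xf) by (intros y Hy; destruct (Hxf y Hy) as [A1 [A2 _]]; auto).
    exists (fun y => (1 - A_size_gf p i (1 - y)) / rpow y ((beta - 2) / (beta - 1))). split.
    + apply (l2_sv a l1 h d xf _ HA HXF). intros y Hy. destruct (Hxf y Hy) as [_ [_ HA3]].
      rewrite HA3. unfold rpow. destruct (Rle_dec y 0); [lra|].
      replace ((beta - 2) / (beta - 1)) with (a / (a + 1)) by (unfold a; f_equal; ring). f_equal; ring.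
    + intros z Hz. replace (1 - (1 - z)) with z by ring. unfold rpow. destruct (Rle_dec (1 - z) 0); [lra|].
      unfold a in *. pose proof (Rpow_pos (1 - z) ((beta - 2) / (beta - 1)) ltac:(lra)). field. lra.
  -
    destruct (comb_B p F Hod HF) as [HS [HS1 [HSF [HZ [HZ0 HZS]]]]].
    set (Sx := nnsum (gw_weight p)) in *.
    assert (HS1' : Sx = 1).
    { destruct (Req_dec Sx 1) as [|Hne]; auto. exfalso.
      assert (0 < 1 - Sx <= 1) by lra.
      pose proof (h_pos a l1 h d (1 - Sx) HA H).
      pose proof (HFh (1 - Sx)). replace (1 - (1 - Sx)) with Sx in H1 by ring. lra. }
    set (Z := fun n => nnsum (un p n)).
    set (q := fun n => 1 - Z n).
    assert (HZr : forall n, 0 <= Z n <= 1) by (intros n; destruct (HZ n) as [_ Hr]; unfold Z; lra).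
    assert (HQ : QS h q).
    { split; [unfold q, Z; rewrite HZ0; ring|].
      intros n. unfold q. fold (Z (S n)). unfold Z at 1. rewrite HZS. fold (Z n).
      replace (F (Z n)) with (F (1 - (1 - Z n))) by (f_equal; ring). rewrite HFh. ring. }
    assert (Dle1 : forall w, 0 <= w < 1 -> Dser p w <= 1).
    { intros w Hw. pose proof (d_pos a l1 h d (1 - w) HA ltac:(lra)). unfold d in H.
      replace (1 - (1 - w)) with w in H by ring. lra. }
    assert (Hcc : forall m, 0 <= cc p m) by (intros; apply cc_nonneg; auto).
    assert (Hmean : infinite_sum (fun m => cc p m * 1 ^ m) 1).
    { apply isum_of_sup.
      - intros m; rewrite pow1, Rmult_1_r; auto.
      - intros N. destruct (Rle_lt_dec (psum (fun m => cc p m * 1 ^ m) N) 1) as [|Hgt]; auto. exfalso.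
        set (P := psum (fun m => cc p m * 1 ^ m) N) in *.
        set (K := psum (fun m => cc p m * INR m) N).
        assert (K0 : 0 <= K) by (apply psum_nonneg; intros; apply Rmult_le_pos; auto; apply pos_INR).
        set (del := Rmin (1 / 2) ((P - 1) / (2 * (K + 1)))).
        assert (Hdel : 0 < del <= 1 / 2) by (split; [apply Rmin_pos; [lra|apply Rdiv_lt_0_compat; lra]|apply Rmin_l]).
        assert (Hdel2 : del <= (P - 1) / (2 * (K + 1))) by apply Rmin_r.
        set (w := 1 - del).
        assert (Pw : psum (fun m => cc p m * w ^ m) N <= 1).
        { eapply Rle_trans; [|apply (Dle1 w ltac:(unfold w; lra))].
          apply isum_le; [intros; apply Rmult_le_pos; auto; apply pow_le; unfold w; lra|apply Dser_spec; auto; unfold w; lra]. }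
        assert (P - psum (fun m => cc p m * w ^ m) N <= K * del).
        { unfold P, K. rewrite <- psum_minus, Rmult_comm, <- psum_scal. apply psum_le. intros m _.
          rewrite <- Rmult_minus_distr_l. replace (del * (cc p m * INR m)) with (cc p m * (INR m * (1 - w))) by (unfold w; ring).
          apply Rmult_le_compat_l; auto. apply pow_diff_le; unfold w; lra. }
        assert (K * del <= K * ((P - 1) / (2 * (K + 1)))) by (apply Rmult_le_compat_l; lra).
        assert (K * ((P - 1) / (2 * (K + 1))) <= (P - 1) / 2).
        { replace (K * ((P - 1) / (2 * (K + 1)))) with ((P - 1) / 2 * (K / (K + 1))) by (field; lra).
          assert (K / (K + 1) <= 1).
          { apply Rmult_le_reg_r with (K + 1); [lra|]. unfold Rdiv; rewrite Rmult_assoc, Rinv_l; lra. }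
          assert (0 <= (P - 1) / 2) by lra. nra. }
        lra.
      - intros eps He. destruct (d_to0 a l1 h d HA (eps / 2) ltac:(lra)) as [dl [Hdl Dt]].
        set (x := Rmin (dl / 2) (1 / 2)).
        assert (Hx : 0 < x < dl) by (split; [apply Rmin_pos; lra|unfold x; eapply Rle_lt_trans; [apply Rmin_l|lra]]).
        assert (Hx1 : x <= 1 / 2) by apply Rmin_r.
        specialize (Dt x Hx). unfold d in Dt.
        destruct (isum_approx _ _ (eps / 2) (Dser_spec p (1 - x) Hod ltac:(lra)) ltac:(lra)) as [N HN].
        exists N. specialize (HN N (le_n _)).
        assert (psum (fun m => cc p m * (1 - x) ^ m) N <= psum (fun m => cc p m * 1 ^ m) N).
        { apply psum_le. intros m _. apply Rmult_le_compat_l; auto. apply pow_incr; lra. }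
        lra. }
    assert (Hm0 : exists m0, 0 < p (S m0)).
    { apply not_all_not_ex. intros Hn.
      assert (Hz : forall m, p (S m) = 0) by (intros m; specialize (Hn m); specialize (Hp (S m)); lra).
      destruct (d_to0 a l1 h d HA (1 / 2) ltac:(lra)) as [dl [Hdl Dt]].
      set (x := Rmin (dl / 2) (1 / 2)).
      assert (Hx : 0 < x < dl) by (split; [apply Rmin_pos; lra|unfold x; eapply Rle_lt_trans; [apply Rmin_l|lra]]).
      assert (Hx1 : x <= 1 / 2) by apply Rmin_r.
      specialize (Dt x Hx). unfold d in Dt.
      assert (Dser p (1 - x) = 0).
      { apply (isum_unique (fun m => cc p m * (1 - x) ^ m)); [apply Dser_spec; auto; lra|].
        apply isum_of_sup; [intros; unfold cc; rewrite Hz; lra| |].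
        - intros N; unfold psum; rewrite (lsum_ext _ (fun _ => 0)); [rewrite lsum_const; lra|]. intros; unfold cc; rewrite Hz; ring.
        - intros eps He; exists O; unfold psum; simpl; lra. }
      lra. }
    destruct Hm0 as [m0 Hm0].
    assert (H5 : forall x, 0 < x <= 1 -> h x < x).
    { intros x Hx. destruct (Req_dec x 1) as [->|Hne].
      - assert (Hp0 : infinite_sum (fun k => p k * 0 ^ k) (p O)).
        { apply isum_of_sup.
          - intros [|k]; simpl; [rewrite Rmult_1_r; apply Hp|rewrite Rmult_0_l, Rmult_0_r; lra].
          - intros [|N]; [unfold psum; simpl; apply Hp|]. rewrite psum_shift.
            rewrite (psum_ext _ (fun _ => 0)); [unfold psum; rewrite lsum_const; simpl; lra|]. intros; simpl; ring.
          - intros eps He; exists 1%nat. unfold psum; simpl; lra. }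
        assert (F0 : F 0 = p O) by (apply (isum_unique (fun k => p k * 0 ^ k)); [apply HF; lra|exact Hp0]).
        pose proof (HFh 1) as E. replace (1 - 1) with 0 in E by ring. rewrite F0 in E.
        assert (p O + p (S m0) <= 1).
        { apply Rle_trans with (psum p (S (S m0))); [|apply psum_p_le1; auto].
          rewrite psum_S. assert (p O <= psum p (S m0)).
          { apply Rle_trans with (psum p 1); [unfold psum; simpl; lra|apply psum_mono; auto; lia]. }
          lra. }
        lra.
      - assert (Hd1 : d x < 1).
        { unfold d. assert (0 < Dser p (1 - x)); [|lra].
          apply Rlt_le_trans with (psum (fun m => cc p m * (1 - x) ^ m) (S m0)).
          - rewrite psum_S. assert (0 <= psum (fun m => cc p m * (1 - x) ^ m) m0).
            { apply psum_nonneg; intros; apply Rmult_le_pos; auto; apply pow_le; lra. }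
            assert (0 < cc p m0 * (1 - x) ^ m0); [|lra].
            apply Rmult_lt_0_compat; [unfold cc; apply Rmult_lt_0_compat; auto; apply lt_0_INR; lia|apply pow_lt; lra].
          - apply isum_le; [intros; apply Rmult_le_pos; auto; apply pow_le; lra|apply Dser_spec; auto; lra]. }
        pose proof (g_le_d a l1 h d x HA Hx). rewrite (h_eq h x) by lra.
        pose proof (g_pos a l1 h d x HA Hx). nra. }
    pose proof (q_main a l1 h d q HA H5 HQ) as QM.
    pose proof (q_range a l1 h d q HA H5 HQ) as QR.
    apply cv_shift.
    assert (Hsurv : forall n, A_survival p i (S n) = d (q n)).
    { intros n. assert (Hq := proj1 (QR n)).
      rewrite (comb_surv p i n F 1 (Dser p (Z n)) Hod HF).
      - unfold d, q. replace (1 - (1 - Z n)) with (Z n) by ring. ring.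
      - fold Sx. rewrite HS1'. exact Hmean.
      - apply Dser_spec; auto. unfold q in Hq. split; [apply HZr|lra]. }
    assert (Hlim : Un_cv (fun n => d (q n) * INR (S n) * (a / (a + 1))) ((a + 1) / a * (a / (a + 1))))
      by (apply CV_mult; [exact QM|apply cv_const]).
    replace ((a + 1) / a * (a / (a + 1))) with 1 in Hlim by (field; lra).
    apply (cv_ext _ _ _ O Hlim).
    intros n _. rewrite Hsurv. replace (beta - 1) with (a + 1) by (unfold a; ring). fold a.
    assert (0 < INR (S n)) by (apply lt_0_INR; lia). field. lra.
Qed.
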